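(* Let $B:\mathbb{R}^2\to\mathbb{R}$ satisfy, for every multi-index $\beta\in\mathbb{N}_0^2$ and some $s_B>4$, $|\partial^\beta B(x)|\lesssim(1+|x|)^{-s_B-|\beta|}$, and suppose $\int_{\mathbb{R}^2}B(x)dx=0$. Then there exists a differentiable vector field $A:\mathbb{R}^2\to\mathbb{R}^2$ with $\mathrm{curl}\,A=B$ such that $$|\nabla\cdot A(x)|\lesssim(1+|x|)^{-3-0},\qquad |A(x)|\lesssim(1+|x|)^{-3-0}.$$
   Context: ''$f\lesssim(1+|x|)^{-a-0}$'' means $(1+|x|)^af(x)\to0$ as $|x|\to\infty$; $f\lesssim g$ means $f\le cg$ for some constant $c$. *)

(* Defs.v *)
From Stdlib Require Import Reals List.
From Coquelicot Require Import Coquelicot.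
Open Scope R_scope.

Definition norm2 (x y : R) : R := sqrt (x ^ 2 + y ^ 2).

Definition pd1 (f : R -> R -> R) : R -> R -> R :=
  fun x y => Derive (fun t => f t y) x.
Definition pd2 (f : R -> R -> R) : R -> R -> R :=
  fun x y => Derive (fun t => f x t) y.

(* iterated partial derivatives along a list of directions (true = x, false = y) *)
Fixpoint iterD (l : list bool) (f : R -> R -> R) : R -> R -> R :=
  match l with
  | nil => f
  | b :: l' => (if b then pd1 else pd2) (iterD l' f)
  end.

Definition smooth2 (f : R -> R -> R) : Prop :=
  forall l : list bool,
    (forall x y, continuous (fun p : R * R => iterD l f (fst p) (snd p)) (x, y)) /\
    (forall x y, ex_derive (fun t => iterD l f t y) x /\
                 ex_derive (fun t => iterD l f x t) y).

Definition dmulti (k l : nat) (f : R -> R -> R) : R -> R -> R :=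
  Nat.iter k pd1 (Nat.iter l pd2 f).

Definition differentiable2 (f : R -> R -> R) : Prop :=
  forall x y, ex_filterdiff (fun p : R * R => f (fst p) (snd p)) (locally (x, y)).

(* f ≲ (1+|x|)^{-a-0}  :<=>  (1+|x|)^a f(x) -> 0 as |x| -> oo *)
Definition decay_little (a : R) (f : R -> R -> R) : Prop :=
  forall eps : R, 0 < eps -> exists R0 : R, forall x y,
    R0 < norm2 x y -> Rabs (Rpower (1 + norm2 x y) a * f x y) < eps.

(* integral over R^2, as iterated improper integral (Fubini) *)
Definition integral_R2_is (f : R -> R -> R) (v : R) : Prop :=
  is_RInt_gen
    (fun x => RInt_gen (fun y => f x y) (Rbar_locally m_infty) (Rbar_locally p_infty))
    (Rbar_locally m_infty) (Rbar_locally p_infty) v.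

(* Main.v *)
Require Import Defs.
From Stdlib Require Import Reals List Lra Psatz.
From Coquelicot Require Import Coquelicot.
Open Scope R_scope.



Definition P (q z : R) := Rpower (1 + z) (- q).

Lemma P_pos q z : 0 <= z -> 0 < P q z.
Proof. intros. unfold P, Rpower. apply exp_pos. Qed.

Lemma P_mul q1 q2 z : 0 <= z -> P q1 z * P q2 z = P (q1 + q2) z.
Proof. intros. unfold P. rewrite <- Rpower_plus. f_equal. ring. Qed.

Lemma P_one z : 0 <= z -> P 1 z = / (1 + z).
Proof. intros. unfold P. rewrite Rpower_Ropp, Rpower_1; auto; lra. Qed.

Lemma P_anti q z1 z2 : 0 <= q -> 0 <= z1 <= z2 -> P q z2 <= P q z1.
Proof.
  intros Hq Hz. unfold P. rewrite !Rpower_Ropp.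
  assert (H1 : 0 < Rpower (1 + z1) q) by (unfold Rpower; apply exp_pos).
  apply Rinv_le_contravar; auto.
  apply Rle_Rpower_l; lra.
Qed.

Lemma P_zero q : P q 0 = 1.
Proof. unfold P, Rpower. replace (1+0) with 1 by ring. rewrite ln_1. rewrite Rmult_0_r. apply exp_0. Qed.

Lemma P_le1 q z : 0 <= q -> 0 <= z -> P q z <= 1.
Proof. intros. rewrite <- (P_zero q). apply P_anti; lra. Qed.

Lemma P_three z : 0 <= z -> P 3 z = / (1 + z) ^ 3.
Proof.
  intros. unfold P. rewrite Rpower_Ropp. replace 3 with (INR 3) by (simpl; ring).
  rewrite Rpower_pow; [|lra]. reflexivity.
Qed.

Lemma P_scale q z1 z2 : 0 <= q -> 0 <= z1 -> 0 <= z2 -> 1 + z2 <= 2 * (1 + z1) ->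
  P q z1 <= Rpower 2 q * P q z2.
Proof.
  intros Hq H1 H2 H.
  assert (HA : P q (1 + 2 * z1) <= P q z2) by (apply P_anti; lra).
  unfold P in *. replace (1 + (1 + 2 * z1)) with (2 * (1 + z1)) in HA by ring.
  rewrite Rpower_Ropp in HA. rewrite <- Rpower_mult_distr in HA by lra.
  rewrite !Rpower_Ropp in *.
  assert (A1 : 0 < Rpower 2 q) by (unfold Rpower; apply exp_pos).
  assert (A2 : 0 < Rpower (1 + z1) q) by (unfold Rpower; apply exp_pos).
  rewrite Rinv_mult in HA.
  apply (Rmult_le_compat_l (Rpower 2 q)) in HA; [|lra].
  rewrite <- Rmult_assoc, Rinv_r, Rmult_1_l in HA; lra.
Qed.

Lemma norm2_ge0 x y : 0 <= norm2 x y.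
Proof. unfold norm2; apply sqrt_pos. Qed.

Lemma norm2_ge_l x y : Rabs x <= norm2 x y.
Proof.
  unfold norm2. rewrite <- sqrt_Rsqr_abs. apply sqrt_le_1_alt. unfold Rsqr. nra.
Qed.

Lemma norm2_ge_r x y : Rabs y <= norm2 x y.
Proof.
  unfold norm2. rewrite <- sqrt_Rsqr_abs. apply sqrt_le_1_alt. unfold Rsqr. nra.
Qed.

Lemma norm2_le x y : norm2 x y <= Rabs x + Rabs y.
Proof.
  unfold norm2. rewrite <- (sqrt_Rsqr (Rabs x + Rabs y)) by (pose proof (Rabs_pos x); pose proof (Rabs_pos y); lra).
  apply sqrt_le_1_alt. unfold Rsqr.
  pose proof (Rabs_pos x); pose proof (Rabs_pos y).
  replace (x ^ 2) with (Rabs x * Rabs x) by (rewrite <- Rabs_mult; simpl; rewrite Rmult_1_r; apply Rabs_pos_eq; nra).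
  replace (y ^ 2) with (Rabs y * Rabs y) by (rewrite <- Rabs_mult; simpl; rewrite Rmult_1_r; apply Rabs_pos_eq; nra).
  nra.
Qed.

Lemma norm2_opp x y : norm2 x (- y) = norm2 x y.
Proof. unfold norm2. f_equal. ring. Qed.

Lemma norm2_0 y : norm2 0 y = Rabs y.
Proof. unfold norm2. rewrite <- sqrt_Rsqr_abs. f_equal. unfold Rsqr. ring. Qed.

Lemma norm2_mono x y t : Rabs y <= Rabs t -> norm2 x y <= norm2 x t.
Proof.
  intros H. unfold norm2. apply sqrt_le_1_alt.
  pose proof (Rabs_pos y).
  assert (y ^ 2 <= t ^ 2).
  { replace (y ^ 2) with (Rabs y * Rabs y) by (rewrite <- Rabs_mult; simpl; rewrite Rmult_1_r; apply Rabs_pos_eq; nra).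
    replace (t ^ 2) with (Rabs t * Rabs t) by (rewrite <- Rabs_mult; simpl; rewrite Rmult_1_r; apply Rabs_pos_eq; nra).
    nra. }
  lra.
Qed.

Lemma atan_le_id u : 0 <= u -> atan u <= u.
Proof.
  intros Hu. destruct (Req_dec u 0) as [->|Hn]. rewrite atan_0; lra.
  destruct (MVT_gen atan 0 u (fun x => / (1 + x²))) as [c [Hc Hd]].
  - intros; apply is_derive_atan.
  - intros. apply derivable_continuous_pt. exists (/(1 + x^2)). apply derivable_pt_lim_atan.
  - rewrite atan_0 in Hd. rewrite Rminus_0_r in Hd. rewrite Hd.
    assert (0 < / (1 + c²) <= 1).
    { unfold Rsqr. split. apply Rinv_0_lt_compat; nra.
      rewrite <- Rinv_1. apply Rinv_le_contravar; nra. }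
    nra.
Qed.

Lemma atan_tail Y : 0 < Y -> PI / 2 - atan Y <= / Y.
Proof.
  intros. rewrite <- atan_inv by auto. apply atan_le_id.
  left; apply Rinv_0_lt_compat; auto.
Qed.

Lemma atan_tail_ge0 Y : 0 <= PI / 2 - atan Y.
Proof. pose proof (atan_bound Y). lra. Qed.

Lemma len_bound Y Z : 0 <= Y -> 0 <= Z <= 2 * Y -> (PI / 2 - atan Y) * (1 + Z) <= 6.
Proof.
  intros HY HZ. pose proof PI_RGT_0. pose proof PI_4.
  pose proof (atan_bound Y).
  destruct (Rle_lt_dec 1 Y).
  - pose proof (atan_tail Y ltac:(lra)).
    pose proof (atan_tail_ge0 Y).
    apply Rle_trans with (/ Y * (1 + 2 * Y)).
    + apply Rmult_le_compat; lra.
    + rewrite Rmult_plus_distr_l, Rmult_1_r.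
      replace (/ Y * (2 * Y)) with 2 by (field; lra).
      assert (/ Y <= 1). { apply Rmult_le_reg_r with Y; [lra|]. rewrite Rinv_l; lra. } lra.
  - assert (0 <= atan Y). { destruct (Req_dec Y 0). subst; rewrite atan_0; lra.
      left. rewrite <- atan_0. apply atan_increasing. lra. }
    apply Rle_trans with (PI / 2 * 3). apply Rmult_le_compat. lra. lra. lra. lra. lra.
Qed.

Definition T (h : R -> R -> R) (x th : R) : R :=
  if Rlt_dec (Rabs th) (PI / 2) then h x (tan th) * (1 + tan th ^ 2) else 0.

Lemma cos_pos_in th : Rabs th < PI / 2 -> 0 < cos th.
Proof. intros H. apply Rabs_def2 in H. apply cos_gt_0; lra. Qed.

Lemma cos_tan_bound th : Rabs th < PI / 2 -> / (1 + Rabs (tan th)) <= cos th.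
Proof.
  intros H. pose proof (cos_pos_in th H) as Hc.
  unfold tan. rewrite Rabs_div by lra. rewrite (Rabs_pos_eq (cos th)) by lra.
  replace (1 + Rabs (sin th) / cos th) with ((cos th + Rabs (sin th)) / cos th) by (field; lra).
  rewrite Rinv_div.
  pose proof (sin2_cos2 th). unfold Rsqr in H0.
  pose proof (Rabs_pos (sin th)).
  assert (Hs : Rabs (sin th) * Rabs (sin th) = sin th * sin th) by (rewrite <- Rabs_mult; apply Rabs_pos_eq; nra).
  assert (1 <= cos th + Rabs (sin th)) by nra.
  unfold Rdiv. apply Rle_trans with (cos th * 1). apply Rmult_le_compat_l. lra.
  rewrite <- Rinv_1. apply Rinv_le_contravar; lra. lra.
Qed.

Section TS.
Variable h : R -> R -> R.
Variable C : R.
Hypothesis HC : 0 <= C.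
Hypothesis Hb : forall x t, Rabs (h x t) * (1 + t ^ 2) <= C / (1 + Rabs t).
Hypothesis Hc : forall x t, continuous (fun p : R * R => h (fst p) (snd p)) (x, t).

Lemma T_bound x th : Rabs (T h x th) <= C * Rabs (cos th).
Proof.
  unfold T. destruct (Rlt_dec (Rabs th) (PI / 2)) as [H|H].
  - pose proof (cos_tan_bound th H). pose proof (cos_pos_in th H).
    rewrite (Rabs_pos_eq (cos th)) by lra.
    rewrite Rabs_mult. rewrite (Rabs_pos_eq (1 + tan th ^ 2)) by nra.
    eapply Rle_trans. apply Hb. unfold Rdiv. apply Rmult_le_compat_l; auto.
  - rewrite Rabs_R0. apply Rmult_le_pos; auto. apply Rabs_pos.
Qed.

Lemma T_boundC x th : Rabs (T h x th) <= C.
Proof.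
  eapply Rle_trans. apply T_bound. rewrite <- (Rmult_1_r C) at 2.
  apply Rmult_le_compat_l; auto. apply Rabs_le. pose proof (COS_bound th). lra.
Qed.

Lemma cos_lip a b : Rabs (cos a - cos b) <= Rabs (a - b).
Proof.
  destruct (MVT_abs cos (fun x => - sin x) b a) as [c [Hc1 _]].
  - intros. apply derivable_pt_lim_cos.
  - rewrite Hc1. rewrite Rabs_Ropp. rewrite <- (Rmult_1_l (Rabs (a - b))) at 2.
    apply Rmult_le_compat_r. apply Rabs_pos. apply Rabs_le. apply SIN_bound.
Qed.

Lemma cont2_of x y (f : R -> R -> R) :
  continuous (fun p : R * R => f (fst p) (snd p)) (x, y) -> continuity_2d_pt f x y.
Proof. intros H. apply continuity_2d_pt_filterlim. exact H. Qed.

Lemma cont_of2 x y (f : R -> R -> R) :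
  continuity_2d_pt f x y -> continuous (fun p : R * R => f (fst p) (snd p)) (x, y).
Proof. intros H. apply continuity_2d_pt_filterlim. exact H. Qed.

Lemma tan_cont th : Rabs th < PI / 2 -> continuous tan th.
Proof.
  intros H. apply (@ex_derive_continuous R_AbsRing R_NormedModule tan th). eexists. apply is_derive_tan.
  pose proof (cos_pos_in th H). lra.
Qed.

Lemma T_cont2 x th : continuity_2d_pt (T h) x th.
Proof.
  destruct (Rlt_dec (Rabs th) (PI / 2)) as [H|H].
  - apply continuity_2d_pt_ext_loc with (f := fun u v => h u (tan v) * (1 + tan v ^ 2)).
    + assert (Hd : 0 < PI / 2 - Rabs th) by lra.
      exists (mkposreal _ Hd). intros u v _ Hv. simpl in Hv. unfold T.
      destruct (Rlt_dec (Rabs v) (PI / 2)) as [H'|H']. reflexivity.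
      exfalso. apply H'. pose proof (Rabs_triang_inv v th). lra.
    + apply continuity_2d_pt_mult.
      * apply cont2_of.
        apply (continuous_comp_2 (fun p : R * R => fst p) (fun p : R * R => tan (snd p)) h).
        -- apply continuous_fst.
        -- apply (continuous_comp (fun p : R * R => snd p) tan). apply continuous_snd. simpl. apply tan_cont; auto.
        -- simpl. apply Hc.
      * apply (continuity_1d_2d_pt_comp (fun z => 1 + tan z ^ 2) (fun _ v => v)).
        -- apply continuity_pt_filterlim.
           apply (continuous_plus (fun _ => 1) (fun z => tan z ^ 2)).
           apply continuous_const.
           apply (continuous_mult tan (fun z => tan z ^ 1)). apply tan_cont; auto.
           apply (continuous_mult tan (fun z => 1)). apply tan_cont; auto. apply continuous_const.
        -- apply continuity_2d_pt_id2.
  - destruct (Req_dec (Rabs th) (PI / 2)) as [He|He].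
    + intros eps.
      assert (Hd : 0 < eps / (C + 1)). { apply Rdiv_lt_0_compat. apply cond_pos. lra. }
      exists (mkposreal _ Hd). intros u v _ Hv. simpl in Hv.
      unfold T at 2. destruct (Rlt_dec (Rabs th) (PI / 2)); [lra|].
      rewrite Rminus_0_r.
      assert (Hcth : cos th = 0).
      { unfold Rabs in He. destruct (Rcase_abs th).
          replace th with (- (PI / 2)) by lra. rewrite cos_neg. apply cos_PI2.
          rewrite He. apply cos_PI2. }
      eapply Rle_lt_trans. apply T_bound.
      pose proof (cos_lip v th). rewrite Hcth, Rminus_0_r in H0.
      apply Rle_lt_trans with (C * (eps / (C + 1))).
      apply Rmult_le_compat_l; auto. lra.
      pose proof (cond_pos eps).
      apply Rlt_le_trans with ((C + 1) * (eps / (C + 1))).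
      apply Rmult_lt_compat_r; auto; lra. right; field; lra.
    + assert (Hd : 0 < Rabs th - PI / 2) by lra.
      intros eps. exists (mkposreal _ Hd). intros u v _ Hv. simpl in Hv.
      unfold T. destruct (Rlt_dec (Rabs th) (PI / 2)); [lra|].
      destruct (Rlt_dec (Rabs v) (PI / 2)) as [H'|H'].
      exfalso. pose proof (Rabs_triang_inv th v). rewrite <- Rabs_Ropp in Hv.
      replace (- (v - th)) with (th - v) in Hv by ring. lra.
      rewrite Rminus_0_r, Rabs_R0. apply cond_pos.
Qed.

Lemma T_cont x th : continuous (fun p : R * R => T h (fst p) (snd p)) (x, th).
Proof. apply cont_of2. apply T_cont2. Qed.

Lemma T_cont1 x th : continuous (T h x) th.
Proof.
  apply (continuous_comp_2 (fun _ : R => x) (fun z : R => z) (T h)).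
  apply continuous_const. apply continuous_id. apply T_cont.
Qed.

Lemma T_ex x a b : ex_RInt (T h x) a b.
Proof. apply (@ex_RInt_continuous R_CompleteNormedModule). intros. apply T_cont1. Qed.

Lemma T_FTC x th : is_derive (fun z => RInt (T h x) (- PI / 2) z) th (T h x th).
Proof.
  apply (@is_derive_RInt R_NormedModule (T h x) (fun z => RInt (T h x) (- PI / 2) z) (- PI / 2) th).
  - apply filter_forall. intros. apply (@RInt_correct R_CompleteNormedModule). apply T_ex.
  - apply T_cont1.
Qed.

Lemma T_FTC_atan x y :
  is_derive (fun z => RInt (T h x) (- PI / 2) (atan z)) y (h x y).
Proof.
  assert (H := is_derive_comp (fun z => RInt (T h x) (- PI / 2) z) atan y _ _ (T_FTC x (atan y)) (is_derive_atan y)).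
  replace (h x y) with (scal (/ (1 + y²)) (T h x (atan y))). exact H.
  unfold T. pose proof (atan_bound y).
  destruct (Rlt_dec (Rabs (atan y)) (PI / 2)) as [H'|H'].
  - rewrite tan_atan. unfold scal; simpl; unfold mult; simpl. unfold Rsqr.
    field. nra.
  - exfalso. apply H'. apply Rabs_def1; lra.
Qed.

Lemma T_RInt_bound x a b : Rabs (RInt (T h x) a b) <= C * Rabs (b - a).
Proof.
  destruct (Rle_lt_dec a b).
  - rewrite (Rabs_pos_eq (b - a)) by lra. rewrite Rmult_comm.
    apply abs_RInt_le_const; auto. apply T_ex. intros. apply T_boundC.
  - rewrite <- opp_RInt_swap by apply T_ex.
    rewrite (Rabs_minus_sym b a). rewrite (Rabs_pos_eq (a - b)) by lra.
    change (Rabs (- RInt (T h x) b a) <= C * (a - b)). rewrite Rabs_Ropp.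
    rewrite Rmult_comm.
    apply abs_RInt_le_const; auto. lra. apply T_ex. intros. apply T_boundC.
Qed.

End TS.

Lemma P_nat n z : 0 <= z -> P (INR n) z = / (1 + z) ^ n.
Proof. intros. unfold P. rewrite Rpower_Ropp, Rpower_pow; auto; lra. Qed.

Lemma atan_le_inv a t : a <= atan t -> tan a <= t \/ Rabs a >= PI / 2.
Proof.
  intros H. destruct (Rlt_dec (Rabs a) (PI / 2)) as [Ha|Ha]; [left|right; lra].
  destruct (Rle_lt_dec (tan a) t) as [H1|H1]; auto.
  apply atan_increasing in H1. rewrite atan_tan in H1. lra.
  apply Rabs_def2 in Ha. lra.
Qed.

Lemma tan_le_of_atan th t : Rabs th < PI / 2 -> th <= atan t -> tan th <= t.
Proof. intros Ha H. destruct (atan_le_inv th t H); auto; lra. Qed.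

Lemma tan_ge_of_atan th t : Rabs th < PI / 2 -> atan t <= th -> t <= tan th.
Proof.
  intros Ha H. destruct (Rle_lt_dec t (tan th)) as [H1|H1]; auto.
  apply atan_increasing in H1. rewrite atan_tan in H1. lra.
  apply Rabs_def2 in Ha. lra.
Qed.

Section EH.
Variable h : R -> R -> R.
Variables C p x : R.
Hypothesis HC : 0 <= C.
Hypothesis Hp2 : 2 <= p.
Hypothesis Hp : forall t, Rabs (h x t) <= C * P p (norm2 x t).
Hypothesis Hex : forall a b, ex_RInt (T h x) a b.

Lemma T_pt th : Rabs th < PI / 2 ->
  Rabs (T h x th) <= C * P p (norm2 x (tan th)) * (1 + tan th ^ 2).
Proof.
  intros H. unfold T. destruct (Rlt_dec (Rabs th) (PI / 2)); [|lra].
  rewrite Rabs_mult, (Rabs_pos_eq (1 + _)) by nra.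
  apply Rmult_le_compat_r. nra. apply Hp.
Qed.

Lemma key_tail th rho : Rabs th < PI / 2 -> 0 <= rho -> rho <= norm2 x (tan th) ->
  Rabs (T h x th) <= C * P (p - 2) rho.
Proof.
  intros H Hr Hr2. eapply Rle_trans. apply T_pt; auto.
  set (t := tan th) in *.
  pose proof (norm2_ge_r x t). pose proof (Rabs_pos t).
  replace p with ((p - 2) + INR 2) at 1 by (simpl; ring).
  rewrite <- P_mul by (apply norm2_ge0).
  assert (A1 : P (p - 2) (norm2 x t) <= P (p - 2) rho) by (apply P_anti; lra).
  assert (A2 : P (INR 2) (norm2 x t) <= P (INR 2) (Rabs t)) by (apply P_anti; simpl; lra).
  rewrite (P_nat 2 (Rabs t)) in A2 by lra.
  assert (A3 : / (1 + Rabs t) ^ 2 * (1 + t ^ 2) <= 1).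
  { rewrite <- (pow2_abs t). set (a := Rabs t) in *.
    apply (Rmult_le_reg_l ((1 + a) ^ 2)); [nra|].
    rewrite <- Rmult_assoc, Rinv_r by nra. nra. }
  pose proof (P_pos (p - 2) (norm2 x t) (norm2_ge0 _ _)).
  pose proof (P_pos (INR 2) (norm2 x t) (norm2_ge0 _ _)).
  assert (0 <= 1 + t ^ 2) by nra.
  rewrite Rmult_assoc. apply Rmult_le_compat_l; auto.
  rewrite Rmult_assoc. rewrite <- (Rmult_1_r (P (p - 2) rho)).
  apply Rmult_le_compat; try nra.
Qed.

Lemma tail_lemma Y th1 : 0 <= Y -> - PI / 2 <= th1 <= - atan Y ->
  Rabs (RInt (T h x) (- PI / 2) th1) <= C * P (p - 2) (norm2 x Y) * (PI / 2 - atan Y).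
Proof.
  intros HY Hth.
  assert (HM : 0 <= C * P (p - 2) (norm2 x Y)).
  { apply Rmult_le_pos; auto. left; apply P_pos, norm2_ge0. }
  eapply Rle_trans.
  - apply abs_RInt_le_const with (M := C * P (p - 2) (norm2 x Y)). lra. apply Hex.
    intros th Ht.
    destruct (Rlt_dec (Rabs th) (PI / 2)) as [H|H].
    + apply key_tail; auto. apply norm2_ge0. apply norm2_mono.
      rewrite (Rabs_pos_eq Y) by lra.
      assert (tan th <= - Y).
      { apply tan_le_of_atan; auto. rewrite atan_opp. lra. }
      rewrite Rabs_left1. lra. lra.
    + unfold T. destruct (Rlt_dec (Rabs th) (PI / 2)); [lra|]. rewrite Rabs_R0; auto.
  - rewrite Rmult_comm. apply Rmult_le_compat_l; auto. lra.
Qed.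

Lemma RInt_tan_sq K a b : Rabs a < PI / 2 -> Rabs b < PI / 2 -> a <= b ->
  RInt (fun th => K * (1 + tan th ^ 2)) a b = K * (tan b - tan a).
Proof.
  intros Ha Hb Hab.
  assert (Hin : forall z, Rmin a b <= z <= Rmax a b -> Rabs z < PI / 2).
  { intros z Hz. rewrite Rmin_left, Rmax_right in Hz by lra.
    apply Rabs_def2 in Ha. apply Rabs_def2 in Hb. apply Rabs_def1; lra. }
  apply is_RInt_unique.
  replace (K * (tan b - tan a)) with (minus (K * tan b) (K * tan a))
    by (unfold minus, plus, opp; simpl; ring).
  apply (is_RInt_derive (fun z => K * tan z)).
  - intros z Hz. replace (K * (1 + tan z ^ 2)) with (K * (tan z ^ 2 + 1)) by ring.
    apply is_derive_scal. apply is_derive_tan. pose proof (cos_pos_in z (Hin z Hz)). lra.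
  - intros z Hz. apply (continuous_scal_r K (fun z => 1 + tan z ^ 2)).
    apply (continuous_plus (fun _ => 1) (fun z => tan z ^ 2)). apply continuous_const.
    apply (continuous_mult tan (fun z => tan z ^ 1)). apply tan_cont; auto.
    apply (continuous_mult tan (fun z => 1)). apply tan_cont; auto. apply continuous_const.
Qed.

Lemma middle_lemma a b : - atan (Rabs x) <= a <= b -> b <= atan (Rabs x) ->
  Rabs (RInt (T h x) a b) <= C * P p (Rabs x) * (tan b - tan a).
Proof.
  intros Ha Hb. set (X := Rabs x) in *. pose proof (atan_bound X).
  assert (Hin : forall z, a <= z <= b -> Rabs z < PI / 2).
  { intros z Hz. apply Rabs_def1; lra. }
  set (K := C * P p X).
  assert (HK : 0 <= K). { apply Rmult_le_pos; auto. left; apply P_pos. apply Rabs_pos. }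
  assert (Hpt : forall z, a < z < b -> Rabs (T h x z) <= K * (1 + tan z ^ 2)).
  { intros z Hz. eapply Rle_trans. apply T_pt. apply Hin; lra.
    apply Rmult_le_compat_r. nra. apply Rmult_le_compat_l; auto.
    apply P_anti. lra. split. apply Rabs_pos.
    apply norm2_ge_l. }
  assert (Hg : ex_RInt (fun th => K * (1 + tan th ^ 2)) a b).
  { apply (@ex_RInt_continuous R_CompleteNormedModule). intros z Hz.
    rewrite Rmin_left, Rmax_right in Hz by lra.
    apply (continuous_scal_r K (fun z => 1 + tan z ^ 2)).
    apply (continuous_plus (fun _ => 1) (fun z => tan z ^ 2)). apply continuous_const.
    apply (continuous_mult tan (fun z => tan z ^ 1)). apply tan_cont; auto.
    apply (continuous_mult tan (fun z => 1)). apply tan_cont; auto. apply continuous_const. }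
  rewrite <- RInt_tan_sq. 2,3: apply Hin; lra. 2: lra.
  apply Rabs_le. split.
  - assert (E : RInt (fun z => - T h x z) a b = - RInt (T h x) a b)
      by (apply (@RInt_opp R_CompleteNormedModule); apply Hex).
    assert (RInt (fun z => - T h x z) a b <= RInt (fun th => K * (1 + tan th ^ 2)) a b).
    { apply RInt_le; try lra. apply (@ex_RInt_opp R_NormedModule), Hex. auto.
      intros z Hz. specialize (Hpt z Hz). apply Rabs_le_between in Hpt. lra. }
    lra.
  - apply RInt_le; try lra. apply Hex. auto.
    intros z Hz. specialize (Hpt z Hz). apply Rabs_le_between in Hpt. lra.
Qed.

Definition KE (p : R) := 7 * Rpower 2 (p - 1) + 6.

Lemma E2 y : y <= 0 ->
  Rabs (RInt (T h x) (- PI / 2) (atan y)) <= C * KE p * P (p - 1) (norm2 x y).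
Proof.
  intros Hy. set (r := norm2 x y). set (X := Rabs x). set (Y := - y).
  assert (Hr0 : 0 <= r) by apply norm2_ge0.
  assert (HX0 : 0 <= X) by apply Rabs_pos.
  assert (Hrle : r <= X + Y).
  { unfold r. eapply Rle_trans. apply norm2_le. rewrite (Rabs_left1 y) by lra. unfold Y, X; lra. }
  assert (HrX : X <= r) by apply norm2_ge_l.
  assert (H2p : 0 < Rpower 2 (p - 1)) by (unfold Rpower; apply exp_pos).
  assert (HPr : 0 < P (p - 1) r) by (apply P_pos; auto).
  assert (HKE : C * 6 * P (p - 1) r <= C * KE p * P (p - 1) r).
  { apply Rmult_le_compat_r. lra. apply Rmult_le_compat_l; auto. unfold KE; lra. }
  assert (Hpm : P (p - 2) r * / (1 + r) = P (p - 1) r).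
  { rewrite <- P_one by auto. rewrite P_mul by auto. f_equal; ring. }
  destruct (Rle_lt_dec X Y) as [HXY|HXY].
  -
    assert (Hn : norm2 x Y = r). { unfold Y, r. rewrite norm2_opp. reflexivity. }
    eapply Rle_trans. apply (tail_lemma Y). unfold Y; lra.
    split. pose proof (atan_bound y); lra. unfold Y; rewrite atan_opp; lra.
    rewrite Hn. eapply Rle_trans; [|exact HKE].
    pose proof (len_bound Y r ltac:(unfold Y; lra) ltac:(lra)).
    pose proof (atan_tail_ge0 Y).
    rewrite <- Hpm.
    replace (C * P (p - 2) r * (PI / 2 - atan Y)) with
      (C * P (p - 2) r * / (1 + r) * ((PI / 2 - atan Y) * (1 + r))) by (field; lra).
    replace (C * 6 * (P (p - 2) r * / (1 + r))) with (C * P (p - 2) r * / (1 + r) * 6) by ring.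
    apply Rmult_le_compat_l; auto.
    apply Rmult_le_pos. apply Rmult_le_pos; auto. left; apply P_pos; auto.
    left; apply Rinv_0_lt_compat; lra.
  -
    assert (HX : 0 < X) by lra.
    pose proof (atan_bound X). pose proof (atan_bound y).
    assert (Hay : - atan X <= atan y).
    { rewrite <- atan_opp. destruct (Req_dec (-X) y). subst; lra. left; apply atan_increasing. unfold Y in HXY; lra. }
    assert (Hay2 : atan y <= atan X).
    { destruct (Req_dec y X). subst; lra. left; apply atan_increasing. lra. }
    rewrite <- (RInt_Chasles (T h x) (- PI / 2) (- atan X) (atan y)) by apply Hex.
    unfold plus; simpl.
    eapply Rle_trans. apply Rabs_triang.
    assert (T1 : Rabs (RInt (T h x) (- PI / 2) (- atan X)) <= C * 6 * P (p - 1) X).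
    { eapply Rle_trans. apply (tail_lemma X); auto. lra.
      assert (HnX : P (p - 2) (norm2 x X) <= P (p - 2) X).
      { apply P_anti. lra. split; auto. pose proof (norm2_ge_r x X) as HH.
        rewrite (Rabs_pos_eq X) in HH by lra. exact HH. }
      pose proof (len_bound X X HX0 ltac:(lra)). pose proof (atan_tail_ge0 X).
      assert (Hpm2 : P (p - 2) X * / (1 + X) = P (p - 1) X).
      { rewrite <- P_one by auto. rewrite P_mul by auto. f_equal; ring. }
      apply Rle_trans with (C * P (p - 2) X * (PI / 2 - atan X)).
      apply Rmult_le_compat_r; auto. apply Rmult_le_compat_l; auto.
      rewrite <- Hpm2.
      replace (C * P (p - 2) X * (PI / 2 - atan X)) with
        (C * P (p - 2) X * / (1 + X) * ((PI / 2 - atan X) * (1 + X))) by (field; lra).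
      replace (C * 6 * (P (p - 2) X * / (1 + X))) with (C * P (p - 2) X * / (1 + X) * 6) by ring.
      apply Rmult_le_compat_l; auto.
      apply Rmult_le_pos. apply Rmult_le_pos; auto. left; apply P_pos; auto.
      left; apply Rinv_0_lt_compat; lra. }
    assert (T2 : Rabs (RInt (T h x) (- atan X) (atan y)) <= C * P (p - 1) X).
    { eapply Rle_trans. apply middle_lemma. fold X; lra. fold X; lra.
      rewrite tan_atan, tan_neg, tan_atan.
      replace p with ((p - 1) + 1) at 1 by ring. rewrite <- P_mul by auto. rewrite P_one by auto.
      pose proof (P_pos (p - 1) X HX0).
      rewrite !Rmult_assoc. apply Rmult_le_compat_l; auto.
      fold X. apply Rle_trans with (P (p - 1) X * 1); [|lra].
      apply Rmult_le_compat_l; [lra|].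
      apply (Rmult_le_reg_l (1 + X)); [lra|].
      rewrite <- Rmult_assoc, Rinv_r by lra. lra. }
    assert (HPs : P (p - 1) X <= Rpower 2 (p - 1) * P (p - 1) r).
    { apply P_scale; auto. lra. lra. }
    assert (0 < P (p - 1) X) by (apply P_pos; auto).
    apply Rle_trans with (C * 7 * P (p - 1) X). lra.
    unfold KE. apply Rle_trans with (C * 7 * (Rpower 2 (p - 1) * P (p - 1) r)).
    apply Rmult_le_compat_l; auto. lra. nra.
Qed.

End EH.

Lemma T_refl h x th : T (fun u t => h u (- t)) x th = T h x (- th).
Proof.
  unfold T. rewrite Rabs_Ropp. destruct (Rlt_dec (Rabs th) (PI / 2)); auto.
  rewrite tan_neg. f_equal. ring.
Qed.

Lemma ex_RInt_refl h x a b : (forall a b, ex_RInt (T h x) a b) ->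
  ex_RInt (T (fun u t => h u (- t)) x) a b.
Proof.
  intros Hex.
  apply (@ex_RInt_ext R_NormedModule (fun z => scal (-1) (scal (-1) (T h x (-1 * z + 0))))).
  - intros z _. rewrite T_refl. unfold scal; simpl; unfold mult; simpl.
    replace (-1 * z + 0) with (- z) by ring. ring.
  - apply (@ex_RInt_scal R_NormedModule). apply (@ex_RInt_comp_lin R_NormedModule). apply Hex.
Qed.

Lemma RInt_refl h x a b : (forall a b, ex_RInt (T h x) a b) ->
  RInt (T (fun u t => h u (- t)) x) a b = RInt (T h x) (- b) (- a).
Proof.
  intros Hex.
  set (g := fun z => T h x (-1 * z + 0)).
  assert (Hg : forall a b, ex_RInt g a b).
  { intros a0 b0. apply (@ex_RInt_ext R_NormedModule (fun z => scal (-1) (scal (-1) (T h x (-1 * z + 0))))).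
    intros; unfold g, scal; simpl; unfold mult; simpl; ring.
    apply (@ex_RInt_scal R_NormedModule). apply (@ex_RInt_comp_lin R_NormedModule). apply Hex. }
  assert (E1 : RInt (T (fun u t => h u (- t)) x) a b = RInt g a b).
  { apply RInt_ext. intros z _. rewrite T_refl. unfold g. f_equal. ring. }
  assert (E2 := @RInt_comp_lin R_CompleteNormedModule (T h x) (-1) 0 a b (Hex _ _)).
  rewrite (@RInt_scal R_CompleteNormedModule g) in E2 by apply Hg.
  unfold scal in E2; simpl in E2; unfold mult in E2; simpl in E2.
  rewrite E1.
  rewrite <- (opp_RInt_swap (T h x)) by apply Hex. unfold opp; simpl.
  replace (- a) with (-1 * a + 0) by ring. replace (- b) with (-1 * b + 0) by ring.
  rewrite <- E2. fold g. assert (HH : forall z : R, z = - (-1 * z)) by (intros; ring). apply HH.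
Qed.

Lemma E3 h C p x y : 0 <= C -> 2 <= p ->
  (forall t, Rabs (h x t) <= C * P p (norm2 x t)) ->
  (forall a b, ex_RInt (T h x) a b) -> 0 <= y ->
  Rabs (RInt (T h x) (atan y) (PI / 2)) <= C * KE p * P (p - 1) (norm2 x y).
Proof.
  intros HC Hp2 Hp Hex Hy.
  assert (E := RInt_refl h x (- PI / 2) (atan (- y)) Hex).
  rewrite atan_opp in E. replace (- - atan y) with (atan y) in E by ring.
  replace (- (- PI / 2)) with (PI / 2) in E by field.
  rewrite <- E. rewrite <- (norm2_opp x y). rewrite <- atan_opp.
  apply E2; auto.
  - intros t. rewrite <- (norm2_opp x t). replace (- - t) with t by ring. apply Hp.
  - intros. apply ex_RInt_refl; auto.
  - lra.
Qed.

Lemma ball_R (c e v : R) : Rabs (v - c) < e -> ball c e v.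
Proof. intros H. unfold ball; simpl. unfold AbsRing_ball, abs, minus, plus, opp; simpl. exact H. Qed.

Lemma atan_tail_neg z : z < 0 -> atan z + PI / 2 <= / (- z).
Proof.
  intros. replace (atan z) with (- atan (- z)) by (rewrite atan_opp; ring).
  pose proof (atan_tail (- z) ltac:(lra)). lra.
Qed.

Section IG.
Variable h : R -> R -> R.
Variable C : R.
Hypothesis HC : 0 <= C.
Hypothesis Hb : forall x t, Rabs (h x t) * (1 + t ^ 2) <= C / (1 + Rabs t).
Hypothesis Hc : forall x t, continuous (fun p : R * R => h (fst p) (snd p)) (x, t).

Lemma h_cont1 x t : continuous (h x) t.
Proof.
  apply (continuous_comp_2 (fun _ : R => x) (fun z : R => z) h).
  apply continuous_const. apply continuous_id. apply Hc.
Qed.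

Lemma Igen x : is_RInt_gen (h x) (Rbar_locally m_infty) (Rbar_locally p_infty)
  (RInt (T h x) (- PI / 2) (PI / 2)).
Proof.
  set (G := fun z => RInt (T h x) (- PI / 2) (atan z)).
  assert (HG : forall z, is_derive G z (h x z)) by (intros; apply (T_FTC_atan h C); auto).
  assert (HD : forall z, Derive G z = h x z) by (intros; apply is_derive_unique; auto).
  set (L := RInt (T h x) (- PI / 2) (PI / 2)).
  replace L with (L - 0) by (unfold L; lra).
  apply (is_RInt_gen_ext (Derive G)).
  { apply filter_forall. intros. apply HD. }
  apply is_RInt_gen_Derive.
  - apply filter_forall. intros. eexists. apply HG.
  - apply filter_forall. intros. apply (continuous_ext (h x)). intros; symmetry; apply HD.
    apply h_cont1.
  - apply filterlim_locally. intros eps. simpl.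
    exists (- (C + 1) / eps). intros z Hz.
    pose proof (cond_pos eps) as He.
    assert (Hz0 : z < 0).
    { apply Rlt_le_trans with (- (C + 1) / eps); auto. unfold Rdiv.
      assert (0 < (C + 1) * / eps) by (apply Rmult_lt_0_compat; [lra|apply Rinv_0_lt_compat; lra]). lra. }
    apply ball_R. rewrite Rminus_0_r. unfold G.
    eapply Rle_lt_trans. apply (T_RInt_bound h C HC Hb Hc).
    pose proof (atan_tail_neg z Hz0). pose proof (atan_bound z).
    rewrite Rabs_pos_eq by lra.
    apply Rle_lt_trans with (C * / (- z)). apply Rmult_le_compat_l; auto. lra.
    apply Rlt_le_trans with ((C + 1) * / (- z)).
    apply Rmult_lt_compat_r. apply Rinv_0_lt_compat; lra. lra.
    apply (Rmult_le_reg_r (- z)). lra. rewrite Rmult_assoc, Rinv_l by lra.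
    apply (Rmult_le_reg_r (/ eps)). apply Rinv_0_lt_compat; lra.
    replace (eps * - z * / eps) with (- z) by (field; lra). unfold Rdiv in Hz. lra.
  - apply filterlim_locally. intros eps. simpl.
    exists ((C + 1) / eps). intros z Hz.
    pose proof (cond_pos eps) as He.
    assert (Hz0 : 0 < z).
    { apply Rle_lt_trans with ((C + 1) / eps); auto. unfold Rdiv.
      left. apply Rmult_lt_0_compat; [lra|apply Rinv_0_lt_compat; lra]. }
    apply ball_R. unfold G, L.
    rewrite <- (RInt_Chasles (T h x) (- PI / 2) (atan z) (PI / 2)) by (apply (T_ex h C); auto).
    unfold plus; simpl.
    replace (RInt (T h x) (- PI / 2) (atan z) -
      (RInt (T h x) (- PI / 2) (atan z) + RInt (T h x) (atan z) (PI / 2))) with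
      (- RInt (T h x) (atan z) (PI / 2)) by ring.
    rewrite Rabs_Ropp.
    eapply Rle_lt_trans. apply (T_RInt_bound h C HC Hb Hc).
    pose proof (atan_tail z Hz0). pose proof (atan_bound z).
    rewrite Rabs_pos_eq by lra.
    apply Rle_lt_trans with (C * / z). apply Rmult_le_compat_l; auto.
    apply Rlt_le_trans with ((C + 1) * / z).
    apply Rmult_lt_compat_r. apply Rinv_0_lt_compat; lra. lra.
    apply (Rmult_le_reg_r z). lra. rewrite Rmult_assoc, Rinv_l by lra.
    apply (Rmult_le_reg_r (/ eps)). apply Rinv_0_lt_compat; lra.
    replace (eps * z * / eps) with z by (field; lra). unfold Rdiv in Hz. lra.
Qed.

End IG.

Definition mx (u : R) := (u + Rabs u) / 2.

Lemma mx_pos u : 0 < u -> mx u = u.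
Proof. intros; unfold mx; rewrite Rabs_pos_eq; lra. Qed.
Lemma mx_neg u : u <= 0 -> mx u = 0.
Proof. intros; unfold mx; rewrite Rabs_left1; lra. Qed.
Lemma mx_ge0 u : 0 <= mx u.
Proof. unfold mx. pose proof (Rle_abs (- u)). rewrite Rabs_Ropp in H. lra. Qed.

Lemma mx_cont u : continuous mx u.
Proof.
  unfold mx. apply (continuous_mult (fun z => z + Rabs z) (fun _ => / 2)).
  apply (continuous_plus (fun z => z) Rabs). apply continuous_id. apply continuous_Rabs.
  apply continuous_const.
Qed.

Lemma is_derive_mx2 u : is_derive (fun z => mx z ^ 2) u (2 * mx u).
Proof.
  destruct (Rlt_le_dec 0 u) as [H|H].
  - apply is_derive_ext_loc with (f := fun z => z ^ 2).
    + assert (Hd : 0 < u) by lra. exists (mkposreal u Hd). intros t Ht.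
      unfold ball in Ht; simpl in Ht; unfold AbsRing_ball, abs, minus, plus, opp in Ht; simpl in Ht.
      apply Rabs_def2 in Ht. rewrite mx_pos by lra. reflexivity.
    + rewrite mx_pos by lra. auto_derive; auto. ring.
  - destruct (Rlt_le_dec u 0) as [H'|H'].
    + apply is_derive_ext_loc with (f := fun z => 0).
      * assert (Hd : 0 < - u) by lra. exists (mkposreal _ Hd). intros t Ht.
        unfold ball in Ht; simpl in Ht; unfold AbsRing_ball, abs, minus, plus, opp in Ht; simpl in Ht.
        apply Rabs_def2 in Ht. rewrite mx_neg by lra. simpl; ring.
      * rewrite mx_neg by lra. replace (2 * 0) with 0 by ring. auto_derive; auto.
    + assert (u = 0) by lra. subst u. rewrite mx_neg by lra.
      apply is_derive_Reals. intros eps Heps.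
      exists (mkposreal eps Heps). intros hh Hh0 Hh. simpl in Hh.
      rewrite Rplus_0_l, (mx_neg 0) by lra.
      replace (2 * 0) with 0 by ring.
      destruct (Rlt_le_dec 0 hh).
      * rewrite mx_pos by lra. replace ((hh ^ 2 - 0 ^ 2) / hh - 0) with hh by (field; lra). auto.
      * rewrite mx_neg by lra. replace ((0 ^ 2 - 0 ^ 2) / hh - 0) with 0 by (field; lra).
        rewrite Rabs_R0; lra.
Qed.

Definition chi (z : R) := 15 / 16 * mx (1 - z ^ 2) ^ 2.
Definition chi' (z : R) := 15 / 16 * (2 * mx (1 - z ^ 2)) * (- 2 * z).

Lemma is_derive_chi z : is_derive chi z (chi' z).
Proof.
  unfold chi, chi'.
  replace (15 / 16 * (2 * mx (1 - z ^ 2)) * (-2 * z)) with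
    (15 / 16 * ((- 2 * z) * (2 * mx (1 - z ^ 2)))) by ring.
  apply (is_derive_scal (fun z => mx (1 - z ^ 2) ^ 2)).
  apply (is_derive_comp (fun u => mx u ^ 2) (fun z => 1 - z ^ 2)).
  apply is_derive_mx2. auto_derive; auto. ring.
Qed.

Lemma chi_cont z : continuous chi z.
Proof. apply (@ex_derive_continuous R_AbsRing R_NormedModule). eexists; apply is_derive_chi. Qed.

Lemma chi'_cont z : continuous chi' z.
Proof.
  unfold chi'.
  apply (continuous_mult (fun z => 15 / 16 * (2 * mx (1 - z ^ 2))) (fun z => - 2 * z)).
  apply (continuous_mult (fun _ => 15 / 16) (fun z => 2 * mx (1 - z ^ 2))). apply continuous_const.
  apply (continuous_mult (fun _ => 2) (fun z => mx (1 - z ^ 2))). apply continuous_const.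
  apply (continuous_comp (fun z => 1 - z ^ 2) mx). 2: apply mx_cont.
  apply (@ex_derive_continuous R_AbsRing R_NormedModule). auto_derive; auto.
  apply (@ex_derive_continuous R_AbsRing R_NormedModule). auto_derive; auto.
Qed.

Lemma mx_1z_le z : mx (1 - z ^ 2) <= 1.
Proof.
  destruct (Rlt_le_dec 0 (1 - z ^ 2)). rewrite mx_pos by lra. nra. rewrite mx_neg by lra. lra.
Qed.

Lemma chi_out z : 1 <= Rabs z -> chi z = 0 /\ chi' z = 0.
Proof.
  intros H. assert (1 <= z ^ 2).
  { rewrite <- (pow2_abs z). nra. }
  unfold chi, chi'. rewrite mx_neg by lra. split; ring.
Qed.

Lemma chi_bound z : 0 <= chi z <= 1.
Proof.
  unfold chi. pose proof (mx_ge0 (1 - z ^ 2)). pose proof (mx_1z_le z). split; nra.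
Qed.

Lemma chi'_bound z : Rabs (chi' z) <= 4.
Proof.
  destruct (Rle_lt_dec 1 (Rabs z)) as [H|H].
  - rewrite (proj2 (chi_out z H)), Rabs_R0; lra.
  - unfold chi'. pose proof (mx_ge0 (1 - z ^ 2)). pose proof (mx_1z_le z).
    rewrite !Rabs_mult. rewrite (Rabs_pos_eq (15 / 16)) by lra.
    rewrite (Rabs_pos_eq (mx _)) by lra.
    rewrite (Rabs_pos_eq 2) by lra. rewrite (Rabs_left (-2)) by lra.
    assert (Rabs z <= 1) by lra. pose proof (Rabs_pos z). nra.
Qed.

Definition Xf (z : R) := RInt chi (-1) z.

Lemma chi_ex a b : ex_RInt chi a b.
Proof. apply (@ex_RInt_continuous R_CompleteNormedModule). intros; apply chi_cont. Qed.

Lemma is_derive_Xf z : is_derive Xf z (chi z).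
Proof.
  apply (@is_derive_RInt R_NormedModule chi Xf (-1) z).
  apply filter_forall. intros. apply (@RInt_correct R_CompleteNormedModule). apply chi_ex.
  apply chi_cont.
Qed.

Lemma Xf_cont z : continuous Xf z.
Proof. apply (@ex_derive_continuous R_AbsRing R_NormedModule). eexists; apply is_derive_Xf. Qed.

Lemma Xf_low z : z <= -1 -> Xf z = 0.
Proof.
  intros H. unfold Xf. rewrite (RInt_ext chi (fun _ => 0)).
  rewrite RInt_const. unfold scal; simpl; unfold mult; simpl; ring.
  intros t Ht. rewrite Rmax_left in Ht by lra. apply chi_out. rewrite Rabs_left; lra.
Qed.

Lemma Xf_one : Xf 1 = 1.
Proof.
  unfold Xf. rewrite (RInt_ext chi (fun z => 15 / 16 * (1 - z ^ 2) ^ 2)).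
  - assert (HH : is_RInt (fun z => 15 / 16 * (1 - z ^ 2) ^ 2) (-1) 1
       (minus (15 / 16 * (1 - 2 / 3 * 1 ^ 3 + / 5 * 1 ^ 5)) (15 / 16 * (-1 - 2 / 3 * (-1) ^ 3 + / 5 * (-1) ^ 5)))).
    { apply (is_RInt_derive (fun z => 15 / 16 * (z - 2 / 3 * z ^ 3 + / 5 * z ^ 5))).
      + intros. auto_derive; auto. field.
      + intros. apply (@ex_derive_continuous R_AbsRing R_NormedModule). auto_derive; auto. }
    apply (@is_RInt_unique R_CompleteNormedModule) in HH. rewrite HH. unfold minus, plus, opp; simpl. field.
  - intros t Ht. rewrite Rmin_left, Rmax_right in Ht by lra.
    unfold chi. rewrite mx_pos. reflexivity. nra.
Qed.

Lemma Xf_high z : 1 <= z -> Xf z = 1.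
Proof.
  intros H. unfold Xf.
  rewrite <- (RInt_Chasles chi (-1) 1 z) by apply chi_ex.
  fold (Xf 1). rewrite Xf_one.
  rewrite (RInt_ext chi (fun _ => 0)).
  rewrite RInt_const. unfold plus, scal; simpl; unfold mult; simpl; ring.
  intros t Ht. rewrite Rmin_left in Ht by lra. apply chi_out. rewrite Rabs_pos_eq; lra.
Qed.

Lemma Xf_bound z : 0 <= Xf z <= 1.
Proof.
  destruct (Rle_lt_dec z (-1)). rewrite Xf_low; lra.
  destruct (Rle_lt_dec 1 z). rewrite Xf_high; lra.
  split.
  - unfold Xf. apply RInt_ge_0. lra. apply chi_ex. intros; apply chi_bound.
  - rewrite <- Xf_one. unfold Xf.
    rewrite <- (RInt_Chasles chi (-1) z 1) by apply chi_ex.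
    unfold plus; simpl.
    assert (0 <= RInt chi z 1). { apply RInt_ge_0. lra. apply chi_ex. intros; apply chi_bound. }
    lra.
Qed.

Definition w (u : R) := sqrt (1 + u ^ 2).
Definition w1 (u : R) := u / w u.
Definition w2 (u : R) := / w u ^ 3.

Lemma w_sq u : w u * w u = 1 + u ^ 2.
Proof. unfold w. apply sqrt_sqrt. nra. Qed.

Lemma w_pos u : 0 < w u.
Proof. unfold w. apply sqrt_lt_R0. nra. Qed.

Lemma w_ge1 u : 1 <= w u.
Proof. pose proof (w_sq u). pose proof (w_pos u). nra. Qed.

Lemma w_ge_abs u : Rabs u <= w u.
Proof. pose proof (w_sq u). pose proof (w_pos u). rewrite <- (pow2_abs u) in H. pose proof (Rabs_pos u). nra. Qed.

Lemma w_le u : w u <= 1 + Rabs u.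
Proof. pose proof (w_sq u). pose proof (w_pos u). rewrite <- (pow2_abs u) in H. pose proof (Rabs_pos u). nra. Qed.

Lemma w_ge_half u : 1 + Rabs u <= 2 * w u.
Proof. pose proof (w_ge1 u). pose proof (w_ge_abs u). lra. Qed.

Lemma w1_bound u : Rabs (w1 u) <= 1.
Proof.
  unfold w1. pose proof (w_pos u). rewrite Rabs_div by lra. rewrite (Rabs_pos_eq (w u)) by lra.
  apply (Rmult_le_reg_r (w u)); auto. field_simplify; try lra. pose proof (w_ge_abs u). lra.
Qed.

Lemma is_derive_w u : is_derive w u (w1 u).
Proof.
  unfold w1, w. auto_derive. nra. replace (u * (u * 1)) with (u ^ 2) by ring.
  field. apply Rgt_not_eq, sqrt_lt_R0. nra.
Qed.

Lemma is_derive_w1 u : is_derive w1 u (w2 u).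
Proof.
  pose proof (w_pos u) as Hw.
  assert (H := is_derive_w u).
  unfold w1. auto_derive.
  - repeat split; auto. exists (w1 u); exact H. lra.
  - replace (Derive (fun x : R => w x) u) with (w1 u) by (symmetry; apply is_derive_unique; exact H).
    unfold w1, w2.
    replace (u * (- (1 * (u / w u)) * / (w u * w u))) with (- (u * u) / (w u) ^ 3) by (field; lra).
    replace (u * u) with (w u * w u - 1) by (rewrite w_sq; ring).
    field. lra.
Qed.

Lemma cont_pt_of_derive f x l : is_derive f x l -> continuity_pt f x.
Proof.
  intros H. apply continuity_pt_filterlim.
  apply (@ex_derive_continuous R_AbsRing R_NormedModule). exists l; exact H.
Qed.

Lemma diff_C1 (f p1 p2 : R -> R -> R) x y :
  (forall u v, is_derive (fun z => f z v) u (p1 u v)) ->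
  (forall u v, is_derive (fun z => f u z) v (p2 u v)) ->
  continuity_2d_pt p2 x y ->
  differentiable_pt_lim f x y (p1 x y) (p2 x y).
Proof.
  intros H1 H2 Hc eps.
  assert (He2 : 0 < eps / 2) by (pose proof (cond_pos eps); lra).
  destruct (proj1 (is_derive_Reals _ _ _) (H1 x y) (eps / 2) He2) as [d1 Hd1].
  destruct (Hc (mkposreal _ He2)) as [d2 Hd2].
  assert (Hd : 0 < Rmin d1 d2) by (apply Rmin_pos; [apply cond_pos|apply cond_pos]).
  exists (mkposreal _ Hd). intros u v Hu Hv. simpl in Hu, Hv.
  assert (Hu1 : Rabs (u - x) < d1) by (pose proof (Rmin_l d1 d2); lra).
  assert (Hu2 : Rabs (u - x) < d2) by (pose proof (Rmin_r d1 d2); lra).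
  assert (Hv2 : Rabs (v - y) < d2) by (pose proof (Rmin_r d1 d2); lra).
  assert (PA : Rabs (f u y - f x y - p1 x y * (u - x)) <= eps / 2 * Rabs (u - x)).
  { destruct (Req_dec u x) as [->|Hne].
    - replace (f x y - f x y - p1 x y * (x - x)) with 0 by ring. rewrite Rabs_R0.
      apply Rmult_le_pos; [lra|apply Rabs_pos].
    - specialize (Hd1 (u - x) ltac:(lra) Hu1). simpl in Hd1.
      replace (x + (u - x)) with u in Hd1 by ring.
      replace (f u y - f x y - p1 x y * (u - x)) with
        (((f u y - f x y) / (u - x) - p1 x y) * (u - x)) by (field; lra).
      rewrite Rabs_mult. apply Rmult_le_compat_r. apply Rabs_pos. lra. }
  assert (PB : Rabs (f u v - f u y - p2 x y * (v - y)) <= eps / 2 * Rabs (v - y)).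
  { destruct (MVT_gen (fun z => f u z) y v (p2 u)) as [c [Hc1 Hc2]].
    - intros; apply H2.
    - intros; eapply cont_pt_of_derive; apply H2.
    - rewrite Hc2.
      replace (p2 u c * (v - y) - p2 x y * (v - y)) with ((p2 u c - p2 x y) * (v - y)) by ring.
      rewrite Rabs_mult. apply Rmult_le_compat_r. apply Rabs_pos.
      left. apply (Hd2 u c). auto.
      unfold Rmin, Rmax in Hc1. destruct (Rle_dec y v);
      apply Rabs_def2 in Hv2; apply Rabs_def1; lra. }
  replace (f u v - f x y - (p1 x y * (u - x) + p2 x y * (v - y))) with
    ((f u v - f u y - p2 x y * (v - y)) + (f u y - f x y - p1 x y * (u - x))) by ring.
  eapply Rle_trans. apply Rabs_triang.
  pose proof (Rmax_l (Rabs (u - x)) (Rabs (v - y))).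
  pose proof (Rmax_r (Rabs (u - x)) (Rabs (v - y))).
  pose proof (cond_pos eps). nra.
Qed.

Lemma exdiff_of f p1 p2 x y :
  (forall u v, is_derive (fun z => f z v) u (p1 u v)) ->
  (forall u v, is_derive (fun z => f u z) v (p2 u v)) ->
  continuity_2d_pt p2 x y ->
  ex_filterdiff (fun p : R * R => f (fst p) (snd p)) (locally (x, y)).
Proof.
  intros H1 H2 Hc. eexists. apply filterdiff_differentiable_pt_lim.
  apply diff_C1; eauto.
Qed.

Lemma Dw u : Derive (fun x => w x) u = w1 u.
Proof. apply is_derive_unique, is_derive_w. Qed.
Lemma Dw1 u : Derive (fun x => w1 x) u = w2 u.
Proof. apply is_derive_unique, is_derive_w1. Qed.
Lemma Dchi u : Derive (fun x => chi x) u = chi' u.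
Proof. apply is_derive_unique, is_derive_chi. Qed.
Lemma DXf u : Derive (fun x => Xf x) u = chi u.
Proof. apply is_derive_unique, is_derive_Xf. Qed.
Lemma exw u : ex_derive (fun x => w x) u.
Proof. eexists; apply is_derive_w. Qed.
Lemma exw1 u : ex_derive (fun x => w1 x) u.
Proof. eexists; apply is_derive_w1. Qed.
Lemma exchi u : ex_derive (fun x => chi x) u.
Proof. eexists; apply is_derive_chi. Qed.
Lemma exXf u : ex_derive (fun x => Xf x) u.
Proof. eexists; apply is_derive_Xf. Qed.
Lemma wne u : w u <> 0.
Proof. pose proof (w_pos u); lra. Qed.

Lemma cont_of_deriv (f df : R -> R) : (forall z, is_derive f z (df z)) -> forall z, continuous f z.
Proof. intros H z. apply (@ex_derive_continuous R_AbsRing R_NormedModule). eexists; apply H. Qed.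

Lemma c2_fst (f : R -> R) x y : (forall z, continuous f z) -> continuity_2d_pt (fun u v => f u) x y.
Proof.
  intros H. apply (continuity_1d_2d_pt_comp f (fun u _ => u)).
  apply continuity_pt_filterlim, H. apply continuity_2d_pt_id1.
Qed.

Lemma c2_snd (f : R -> R) x y : (forall z, continuous f z) -> continuity_2d_pt (fun u v => f v) x y.
Proof.
  intros H. apply (continuity_1d_2d_pt_comp f (fun _ v => v)).
  apply continuity_pt_filterlim, H. apply continuity_2d_pt_id2.
Qed.

Lemma winv_cont z : continuous (fun z => / w z) z.
Proof.
  apply (@ex_derive_continuous R_AbsRing R_NormedModule). auto_derive.
  split. apply exw. split; [apply wne|exact I].
Qed.

Lemma winv2_cont z : continuous (fun z => / w z ^ 2) z.
Proof.
  apply (@ex_derive_continuous R_AbsRing R_NormedModule). auto_derive.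
  split. apply exw. split; [|exact I].
  repeat (apply Rmult_integral_contrapositive_currified); first [apply wne | lra].
Qed.

Lemma c2_vv (f : R -> R) x y : (forall z, continuous f z) ->
  continuity_2d_pt (fun u v => f (v * / w u)) x y.
Proof.
  intros H. apply (continuity_1d_2d_pt_comp f (fun u v => v * / w u)).
  apply continuity_pt_filterlim, H.
  apply continuity_2d_pt_mult. apply continuity_2d_pt_id2.
  apply (c2_fst (fun z => / w z)). apply winv_cont.
Qed.

Lemma w1_cont z : continuous w1 z.
Proof. apply (cont_of_deriv w1 w2). apply is_derive_w1. Qed.

Section Asm.
Variables (B F Fx : R -> R -> R) (b b1 be : R -> R) (q K : R).
Hypothesis Hq : 3 < q.
Hypothesis HK : 0 <= K.
Hypothesis HF1 : forall u v, is_derive (fun z => F z v) u (Fx u v).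
Hypothesis HF2 : forall u v, is_derive (fun z => F u z) v (B u v).
Hypothesis Hbd : forall u, is_derive b u (b1 u).
Hypothesis Hbe : forall u, is_derive be u (b u).
Hypothesis HBc : forall u v, continuity_2d_pt B u v.

Lemma DF u v : Derive (fun x => F x v) u = Fx u v.
Proof. apply is_derive_unique, HF1. Qed.
Lemma DF2 u v : Derive (fun x => F u x) v = B u v.
Proof. apply is_derive_unique, HF2. Qed.
Lemma Db u : Derive (fun x => b x) u = b1 u.
Proof. apply is_derive_unique, Hbd. Qed.
Lemma Dbe u : Derive (fun x => be x) u = b u.
Proof. apply is_derive_unique, Hbe. Qed.
Lemma exF u v : ex_derive (fun x => F x v) u.
Proof. eexists; apply HF1. Qed.
Lemma exF2 u v : ex_derive (fun x => F u x) v.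
Proof. eexists; apply HF2. Qed.
Lemma exb u : ex_derive (fun x => b x) u.
Proof. eexists; apply Hbd. Qed.
Lemma exbe u : ex_derive (fun x => be x) u.
Proof. eexists; apply Hbe. Qed.

Ltac nzsolve := repeat (apply Rmult_integral_contrapositive_currified); first [apply wne | lra].
Ltac exsolve := repeat split; repeat match goal with
  | |- ex_derive (fun x => w x) _ => apply exw
  | |- ex_derive (fun x => w1 x) _ => apply exw1
  | |- ex_derive (fun x => chi x) _ => apply exchi
  | |- ex_derive (fun x => Xf x) _ => apply exXf
  | |- ex_derive (fun x => F x _) _ => apply exF
  | |- ex_derive (fun x => F _ x) _ => apply exF2
  | |- ex_derive (fun x => b x) _ => apply exb
  | |- ex_derive (fun x => be x) _ => apply exbe
  | |- _ <> 0 => nzsolve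
  | |- True => exact I
  end.
Ltac dsolve := auto_derive; [exsolve | rewrite ?Dw, ?Dw1, ?Dchi, ?DXf, ?DF, ?DF2, ?Db, ?Dbe;
   pose proof (w_pos _); field; lra].

Definition A1 u v := - F u v + b u * Xf (v / w u) - be u * chi (v / w u) * v * w1 u / w u ^ 2.
Definition A2 u v := be u * chi (v / w u) / w u.
Definition D1 u v := - Fx u v + b1 u * Xf (v / w u) - 2 * b u * chi (v / w u) * v * w1 u / w u ^ 2
  + be u * chi' (v / w u) * v ^ 2 * w1 u ^ 2 / w u ^ 4
  - be u * chi (v / w u) * v * (w2 u / w u ^ 2 - 2 * w1 u ^ 2 / w u ^ 3).
Definition E1 u v := - B u v + b u * chi (v / w u) / w u
  - be u * (chi' (v / w u) * v / w u + chi (v / w u)) * w1 u / w u ^ 2.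
Definition DA2x u v := b u * chi (v / w u) / w u - be u * chi' (v / w u) * v * w1 u / w u ^ 3
  - be u * chi (v / w u) * w1 u / w u ^ 2.
Definition DA2y u v := be u * chi' (v / w u) / w u ^ 2.

Lemma dA2y u v : is_derive (fun z => A2 u z) v (DA2y u v).
Proof. unfold A2, DA2y. auto_derive. exsolve.
  rewrite ?Dw, ?Dw1, ?Dchi, ?DXf, ?DF, ?DF2, ?Db, ?Dbe. unfold Rdiv.
  pose proof (w_pos u). field. lra. Qed.

Lemma dA2x u v : is_derive (fun z => A2 z v) u (DA2x u v).
Proof. unfold A2, DA2x. auto_derive. Time exsolve.
  rewrite ?Dw, ?Dw1, ?Dchi, ?DXf, ?DF, ?DF2, ?Db, ?Dbe. unfold Rdiv.
  pose proof (w_pos u). field. lra. Qed.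
Lemma dA1y u v : is_derive (fun z => A1 u z) v (E1 u v).
Proof. unfold A1, E1. auto_derive. exsolve.
  rewrite ?Dw, ?Dw1, ?Dchi, ?DXf, ?DF, ?DF2, ?Db, ?Dbe. unfold Rdiv.
  pose proof (w_pos u). field. lra. Qed.

Lemma dA1x u v : is_derive (fun z => A1 z v) u (D1 u v).
Proof. unfold A1, D1. auto_derive. exsolve.
  rewrite ?Dw, ?Dw1, ?Dchi, ?DXf, ?DF, ?DF2, ?Db, ?Dbe. unfold Rdiv.
  pose proof (w_pos u). field. lra. Qed.

Lemma b_cont z : continuous b z.
Proof. apply (cont_of_deriv b b1). auto. Qed.
Lemma be_cont z : continuous be z.
Proof. apply (cont_of_deriv be b). auto. Qed.

Lemma E1_cont x y : continuity_2d_pt E1 x y.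
Proof.
  unfold E1. unfold Rdiv.
  repeat first [ apply HBc | apply (c2_vv chi) | apply (c2_vv chi') | apply (c2_fst b) | apply (c2_fst be)
    | apply (c2_fst w1) | apply (c2_fst (fun z => / w z)) | apply (c2_fst (fun z => / w z ^ 2))
    | apply continuity_2d_pt_id2
    | apply continuity_2d_pt_plus | apply continuity_2d_pt_minus | apply continuity_2d_pt_mult
    | apply continuity_2d_pt_opp ].
  all: first [ apply chi_cont | apply chi'_cont | apply b_cont | apply be_cont | apply w1_cont
    | apply winv_cont | apply winv2_cont ].
Qed.

Lemma DA2y_cont x y : continuity_2d_pt DA2y x y.
Proof.
  unfold DA2y. unfold Rdiv.
  repeat first [ apply (c2_vv chi') | apply (c2_fst be)
    | apply (c2_fst (fun z => / w z ^ 2))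
    | apply continuity_2d_pt_mult ].
  all: first [ apply chi'_cont | apply be_cont | apply winv2_cont ].
Qed.

Lemma curl_eq u v : DA2x u v - E1 u v = B u v.
Proof. unfold DA2x, E1. pose proof (w_pos u). field. lra. Qed.

End Asm.

Lemma decay_of (f : R -> R -> R) M q : 0 <= M -> 3 < q ->
  (forall x y, Rabs (f x y) <= M * P q (norm2 x y)) -> decay_little 3 f.
Proof.
  intros HM Hq Hf eps Heps.
  set (R0 := exp (Rabs (ln ((M + 1) / eps)) / (q - 3))).
  exists R0. intros x y Hr. set (r := norm2 x y) in *.
  assert (Hr0 : 0 <= r) by apply norm2_ge0.
  assert (HR0 : 0 < R0) by apply exp_pos.
  assert (Hpw : 0 < Rpower (1 + r) 3) by (unfold Rpower; apply exp_pos).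
  rewrite Rabs_mult, (Rabs_pos_eq (Rpower (1 + r) 3)) by lra.
  assert (Hq' : Rpower (1 + r) 3 * P q r = P (q - 3) r).
  { unfold P. rewrite <- Rpower_plus. f_equal. ring. }
  apply Rle_lt_trans with (M * P (q - 3) r).
  { rewrite <- Hq'. specialize (Hf x y). fold r in Hf. nra. }
  assert (Hln : Rabs (ln ((M + 1) / eps)) / (q - 3) < ln (1 + r)).
  { apply Rlt_le_trans with (ln r).
    - rewrite <- (ln_exp (Rabs _ / _)). apply ln_increasing. apply exp_pos. fold R0. lra.
    - left. apply ln_increasing; lra. }
  assert (H2 : ln ((M + 1) / eps) < (q - 3) * ln (1 + r)).
  { apply Rle_lt_trans with (Rabs (ln ((M + 1) / eps))). apply Rle_abs.
    apply (Rmult_lt_compat_l (q - 3)) in Hln; [|lra].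
    replace ((q - 3) * (Rabs (ln ((M + 1) / eps)) / (q - 3))) with (Rabs (ln ((M + 1) / eps))) in Hln
      by (field; lra). lra. }
  assert (H3 : P (q - 3) r < eps / (M + 1)).
  { unfold P, Rpower. replace (eps / (M + 1)) with (exp (- ln ((M + 1) / eps))).
    apply exp_increasing. lra.
    rewrite exp_Ropp, exp_ln. field. split; lra. apply Rdiv_lt_0_compat; lra. }
  assert (0 < P (q - 3) r) by (apply P_pos; auto).
  apply Rle_lt_trans with ((M + 1) * P (q - 3) r). nra.
  apply Rmult_lt_compat_l with (r := M + 1) in H3; [|lra].
  replace ((M + 1) * (eps / (M + 1))) with eps in H3 by (field; lra). lra.
Qed.

Lemma strip_v u v : Rabs (v / w u) < 1 -> Rabs v < w u.
Proof.
  intros H. pose proof (w_pos u). unfold Rdiv in H. rewrite Rabs_mult, Rabs_inv in H.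
  rewrite (Rabs_pos_eq (w u)) in H by lra.
  apply (Rmult_lt_compat_r (w u)) in H; auto. rewrite Rmult_assoc, Rinv_l in H; lra.
Qed.

Lemma strip_P q u v : 0 <= q -> Rabs v <= w u -> P q (Rabs u) <= Rpower 2 q * P q (norm2 u v).
Proof.
  intros Hq H. apply P_scale; auto. apply Rabs_pos. apply norm2_ge0.
  pose proof (norm2_le u v). pose proof (w_le u). lra.
Qed.

Lemma out_z u v : 1 <= Rabs (v / w u) -> chi (v / w u) = 0 /\ chi' (v / w u) = 0.
Proof. apply chi_out. Qed.

Lemma vneg_of u v : v / w u <= -1 -> v <= 0.
Proof.
  intros H. pose proof (w_pos u). destruct (Rle_lt_dec v 0); auto.
  assert (0 < v / w u) by (apply Rdiv_lt_0_compat; lra). lra.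
Qed.

Lemma vpos_of u v : 1 <= v / w u -> 0 <= v.
Proof.
  intros H. pose proof (w_pos u). destruct (Rle_lt_dec 0 v); auto.
  assert (v / w u < 0). { unfold Rdiv. apply Rmult_neg_pos; auto. apply Rinv_0_lt_compat; lra. } lra.
Qed.

Section Bnd.
Variables (G : R -> R -> R) (g : R -> R) (q K : R).
Hypothesis Hq : 0 <= q.
Hypothesis HK : 0 <= K.
Hypothesis HGl : forall u v, v <= 0 -> Rabs (G u v) <= K * P q (norm2 u v).
Hypothesis HGu : forall u v, 0 <= v -> Rabs (g u - G u v) <= K * P q (norm2 u v).
Hypothesis Hgb : forall u, Rabs (g u) <= K * P q (Rabs u).

Lemma main_part u v :
  Rabs (- G u v + g u * Xf (v / w u)) <= (1 + 2 * Rpower 2 q) * K * P q (norm2 u v).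
Proof.
  set (r := norm2 u v). set (z := v / w u).
  assert (Hc : 0 < Rpower 2 q) by (unfold Rpower; apply exp_pos).
  assert (HP : 0 < P q r) by (apply P_pos, norm2_ge0).
  assert (HKP : 0 <= K * P q r) by nra.
  destruct (Rle_lt_dec z (-1)) as [H1|H1].
  - unfold z. rewrite Xf_low by auto. rewrite Rmult_0_r, Rplus_0_r, Rabs_Ropp.
    eapply Rle_trans. apply HGl. apply (vneg_of u v); auto. fold r. nra.
  - destruct (Rle_lt_dec 1 z) as [H2|H2].
    + unfold z. rewrite Xf_high by auto. rewrite Rmult_1_r.
      replace (- G u v + g u) with (g u - G u v) by ring.
      eapply Rle_trans. apply HGu. apply (vpos_of u v); auto. fold r. nra.
    + assert (Hs : Rabs v < w u) by (apply strip_v; fold z; apply Rabs_def1; lra).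
      assert (HsP := strip_P q u v Hq ltac:(lra)). fold r in HsP.
      pose proof (Xf_bound z).
      assert (HG : Rabs (G u v) <= K * P q r + K * P q (Rabs u)).
      { destruct (Rle_lt_dec v 0).
        - pose proof (HGl u v r0). pose proof (P_pos q (Rabs u) (Rabs_pos u)). fold r in H0. nra.
        - replace (G u v) with (g u - (g u - G u v)) by ring.
          eapply Rle_trans. apply Rabs_triang. rewrite Rabs_Ropp.
          pose proof (HGu u v ltac:(lra)). pose proof (Hgb u). fold r in H0. lra. }
      eapply Rle_trans. apply Rabs_triang. rewrite Rabs_Ropp, Rabs_mult.
      rewrite (Rabs_pos_eq (Xf z)) by lra.
      assert (Rabs (g u) * Xf z <= K * P q (Rabs u)).
      { pose proof (Hgb u). pose proof (Rabs_pos (g u)). nra. }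
      assert (K * P q (Rabs u) <= Rpower 2 q * (K * P q r)) by nra.
      nra.
Qed.

End Bnd.

Lemma abs_mul_le a b A Bc : Rabs a <= A -> Rabs b <= Bc -> Rabs (a * b) <= A * Bc.
Proof. intros. rewrite Rabs_mult. apply Rmult_le_compat; auto; apply Rabs_pos. Qed.

Lemma invW_le u : Rabs (1 / w u) <= 1.
Proof.
  pose proof (w_ge1 u). rewrite Rabs_pos_eq. unfold Rdiv. rewrite Rmult_1_l.
  rewrite <- Rinv_1. apply Rinv_le_contravar; lra.
  unfold Rdiv. rewrite Rmult_1_l. left; apply Rinv_0_lt_compat; lra.
Qed.

Lemma w2_le u : Rabs (w2 u) <= 1.
Proof.
  unfold w2. pose proof (w_ge1 u). assert (1 <= w u ^ 3).
  { replace (w u ^ 3) with (w u * (w u * w u)) by ring.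
    rewrite <- (Rmult_1_l 1) at 1. apply Rmult_le_compat; try lra. rewrite <- (Rmult_1_l 1) at 1. apply Rmult_le_compat; lra. }
  rewrite Rabs_pos_eq. rewrite <- Rinv_1. apply Rinv_le_contravar; lra.
  left; apply Rinv_0_lt_compat; lra.
Qed.

Lemma chi_abs z : Rabs (chi z) <= 1.
Proof. pose proof (chi_bound z). rewrite Rabs_pos_eq; lra. Qed.

Section Bnd2.
Variables (F Fx : R -> R -> R) (b b1 be : R -> R) (q K : R).
Hypothesis Hq : 3 < q.
Hypothesis HK : 0 <= K.
Hypothesis HFl : forall u v, v <= 0 -> Rabs (F u v) <= K * P q (norm2 u v).
Hypothesis HFu : forall u v, 0 <= v -> Rabs (b u - F u v) <= K * P q (norm2 u v).
Hypothesis HFxl : forall u v, v <= 0 -> Rabs (Fx u v) <= K * P q (norm2 u v).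
Hypothesis HFxu : forall u v, 0 <= v -> Rabs (b1 u - Fx u v) <= K * P q (norm2 u v).
Hypothesis Hbb : forall u, Rabs (b u) <= K * P q (Rabs u).
Hypothesis Hb1b : forall u, Rabs (b1 u) <= K * P q (Rabs u).
Hypothesis Hbeb : forall u, Rabs (be u) <= K * P (q - 1) (Rabs u).

Lemma beW u : Rabs (be u / w u) <= 2 * K * P q (Rabs u).
Proof.
  pose proof (w_pos u). pose proof (w_ge_half u). pose proof (Rabs_pos u).
  unfold Rdiv. rewrite Rabs_mult, Rabs_inv, (Rabs_pos_eq (w u)) by lra.
  assert (Hi : / w u <= 2 * / (1 + Rabs u)).
  { apply (Rmult_le_reg_l (w u)); auto. rewrite Rinv_r by lra.
    apply (Rmult_le_reg_r (1 + Rabs u)). lra.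
    replace (w u * (2 * / (1 + Rabs u)) * (1 + Rabs u)) with (2 * w u) by (field; lra). lra. }
  replace (2 * K * P q (Rabs u)) with (K * P (q - 1) (Rabs u) * (2 * / (1 + Rabs u))).
  apply Rmult_le_compat; auto. apply Rabs_pos. left; apply Rinv_0_lt_compat; lra.
  rewrite <- P_one by lra.
  replace (K * P (q - 1) (Rabs u) * (2 * P 1 (Rabs u))) with (2 * K * (P (q - 1) (Rabs u) * P 1 (Rabs u))) by ring.
  rewrite P_mul by lra. f_equal. f_equal. ring.
Qed.

Lemma strip_term (Tm : R -> R -> R) c u v : 0 <= c ->
  (1 <= Rabs (v / w u) -> Tm u v = 0) ->
  (Rabs (v / w u) < 1 -> Rabs (Tm u v) <= c * K * P q (Rabs u)) ->
  Rabs (Tm u v) <= c * Rpower 2 q * K * P q (norm2 u v).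
Proof.
  intros Hc H1 H2.
  assert (Hc2 : 0 < Rpower 2 q) by (unfold Rpower; apply exp_pos).
  assert (0 < P q (norm2 u v)) by (apply P_pos, norm2_ge0).
  destruct (Rle_lt_dec 1 (Rabs (v / w u))) as [Hx|Hx].
  - rewrite H1 by auto. rewrite Rabs_R0. apply Rmult_le_pos; [|lra]. apply Rmult_le_pos; [|lra]. nra.
  - eapply Rle_trans. apply H2; auto.
    pose proof (strip_P q u v ltac:(lra) ltac:(left; apply strip_v; auto)).
    replace (c * Rpower 2 q * K * P q (norm2 u v)) with (c * K * (Rpower 2 q * P q (norm2 u v))) by ring.
    apply Rmult_le_compat_l; auto. nra.
Qed.

Definition T1 u v := be u * chi (v / w u) * v * w1 u / w u ^ 2.
Definition T2 u v := 2 * b u * chi (v / w u) * v * w1 u / w u ^ 2.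
Definition T3 u v := be u * chi' (v / w u) * v ^ 2 * w1 u ^ 2 / w u ^ 4.
Definition T4 u v := be u * chi (v / w u) * v * (w2 u / w u ^ 2 - 2 * w1 u ^ 2 / w u ^ 3).

Ltac zero_out := intros Hz; destruct (out_z _ _ Hz) as [Hc1 Hc2];
  unfold T1, T2, T3, T4, A2, DA2y; rewrite ?Hc1, ?Hc2; unfold Rdiv; rewrite ?Rmult_0_r, ?Rmult_0_l; reflexivity.

Lemma T1_b u v : Rabs (T1 u v) <= 2 * Rpower 2 q * K * P q (norm2 u v).
Proof.
  apply strip_term. lra. intros Hz; destruct (out_z _ _ Hz) as [Hc1 Hc2]. unfold T1. rewrite Hc1. unfold Rdiv. rewrite ?Rmult_0_r, ?Rmult_0_l. reflexivity.
  intros Hz. pose proof (w_pos u).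
  replace (T1 u v) with ((be u / w u) * (chi (v / w u) * (v / w u) * w1 u)) by (unfold T1; field; lra).
  replace (2 * K * P q (Rabs u)) with ((2 * K * P q (Rabs u)) * (1 * 1 * 1)) by ring.
  apply abs_mul_le. apply beW. apply abs_mul_le. apply abs_mul_le.
  apply chi_abs. lra. apply w1_bound.
Qed.

Lemma T2_b u v : Rabs (T2 u v) <= 2 * Rpower 2 q * K * P q (norm2 u v).
Proof.
  apply strip_term. lra. zero_out.
  intros Hz. pose proof (w_pos u).
  replace (T2 u v) with (b u * (2 * chi (v / w u) * (v / w u) * w1 u * (1 / w u))) by (unfold T2; field; lra).
  replace (2 * K * P q (Rabs u)) with ((K * P q (Rabs u)) * (2 * 1 * 1 * 1 * 1)) by ring.
  apply abs_mul_le. apply Hbb.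
  apply abs_mul_le; [|apply invW_le]. apply abs_mul_le; [|apply w1_bound].
  apply abs_mul_le; [|lra]. apply abs_mul_le; [rewrite Rabs_pos_eq; lra|apply chi_abs].
Qed.

Lemma T3_b u v : Rabs (T3 u v) <= 8 * Rpower 2 q * K * P q (norm2 u v).
Proof.
  apply strip_term. lra. zero_out.
  intros Hz. pose proof (w_pos u).
  replace (T3 u v) with ((be u / w u) * (chi' (v / w u) * ((v / w u) * (v / w u)) * (w1 u * w1 u) * (1 / w u)))
    by (unfold T3; field; lra).
  replace (8 * K * P q (Rabs u)) with ((2 * K * P q (Rabs u)) * (4 * (1 * 1) * (1 * 1) * 1)) by ring.
  apply abs_mul_le. apply beW.
  apply abs_mul_le; [|apply invW_le]. apply abs_mul_le.
  apply abs_mul_le. apply chi'_bound. apply abs_mul_le; lra.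
  apply abs_mul_le; apply w1_bound.
Qed.

Lemma T4_b u v : Rabs (T4 u v) <= 6 * Rpower 2 q * K * P q (norm2 u v).
Proof.
  apply strip_term. lra. zero_out.
  intros Hz. pose proof (w_pos u).
  replace (T4 u v) with ((be u / w u) * (chi (v / w u) * (v / w u) * (w2 u - 2 * (w1 u * w1 u) * (1 / w u))))
    by (unfold T4; field; lra).
  replace (6 * K * P q (Rabs u)) with ((2 * K * P q (Rabs u)) * (1 * 1 * 3)) by ring.
  apply abs_mul_le. apply beW. apply abs_mul_le. apply abs_mul_le.
  apply chi_abs. lra.
  unfold Rminus. eapply Rle_trans. apply Rabs_triang. rewrite Rabs_Ropp.
  assert (Rabs (2 * (w1 u * w1 u) * (1 / w u)) <= 2 * (1 * 1) * 1).
  { apply abs_mul_le; [|apply invW_le]. apply abs_mul_le. rewrite Rabs_pos_eq; lra.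
    apply abs_mul_le; apply w1_bound. }
  pose proof (w2_le u). lra.
Qed.

Lemma T5_b u v : Rabs (DA2y be u v) <= 8 * Rpower 2 q * K * P q (norm2 u v).
Proof.
  apply (strip_term (DA2y be)). lra. zero_out.
  intros Hz. pose proof (w_pos u).
  replace (DA2y be u v) with ((be u / w u) * (chi' (v / w u) * (1 / w u)))
    by (unfold DA2y; field; lra).
  replace (8 * K * P q (Rabs u)) with ((2 * K * P q (Rabs u)) * (4 * 1)) by ring.
  apply abs_mul_le. apply beW. apply abs_mul_le. apply chi'_bound. apply invW_le.
Qed.

Lemma A2_b u v : Rabs (A2 be u v) <= 2 * Rpower 2 q * K * P q (norm2 u v).
Proof.
  apply (strip_term (A2 be)). lra. zero_out.
  intros Hz. pose proof (w_pos u).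
  replace (A2 be u v) with ((be u / w u) * chi (v / w u)) by (unfold A2; field; lra).
  replace (2 * K * P q (Rabs u)) with ((2 * K * P q (Rabs u)) * 1) by ring.
  apply abs_mul_le. apply beW. apply chi_abs.
Qed.

Lemma A1_b u v : Rabs (A1 F b be u v) <= (1 + 4 * Rpower 2 q) * K * P q (norm2 u v).
Proof.
  replace (A1 F b be u v) with ((- F u v + b u * Xf (v / w u)) - T1 u v) by (unfold A1, T1; ring).
  unfold Rminus. eapply Rle_trans. apply Rabs_triang. rewrite Rabs_Ropp.
  pose proof (main_part F b q K ltac:(lra) HK HFl HFu Hbb u v).
  pose proof (T1_b u v). lra.
Qed.

Lemma div_b u v : Rabs (D1 Fx b b1 be u v + DA2y be u v) <= (1 + 26 * Rpower 2 q) * K * P q (norm2 u v).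
Proof.
  replace (D1 Fx b b1 be u v + DA2y be u v) with
    ((- Fx u v + b1 u * Xf (v / w u)) - T2 u v + T3 u v - T4 u v + DA2y be u v)
    by (unfold D1, T2, T3, T4; ring).
  pose proof (main_part Fx b1 q K ltac:(lra) HK HFxl HFxu Hb1b u v).
  pose proof (T2_b u v). pose proof (T3_b u v). pose proof (T4_b u v). pose proof (T5_b u v).
  unfold Rminus.
  set (a0 := - Fx u v + b1 u * Xf (v / w u)) in *.
  assert (Rabs (a0 + - T2 u v + T3 u v + - T4 u v + DA2y be u v) <=
    Rabs a0 + Rabs (T2 u v) + Rabs (T3 u v) + Rabs (T4 u v) + Rabs (DA2y be u v)).
  { pose proof (Rabs_triang (a0 + - T2 u v + T3 u v + - T4 u v) (DA2y be u v)).
    pose proof (Rabs_triang (a0 + - T2 u v + T3 u v) (- T4 u v)).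
    pose proof (Rabs_triang (a0 + - T2 u v) (T3 u v)).
    pose proof (Rabs_triang a0 (- T2 u v)).
    rewrite Rabs_Ropp in *. lra. }
  lra.
Qed.

End Bnd2.

Lemma HbP (h rho : R -> R -> R) C p : 0 <= C -> 3 <= p ->
  (forall x t, Rabs t <= rho x t) ->
  (forall x t, Rabs (h x t) <= C * P p (rho x t)) ->
  forall x t, Rabs (h x t) * (1 + t ^ 2) <= C / (1 + Rabs t).
Proof.
  intros HC Hp Hr Hh x t.
  pose proof (Rabs_pos t) as Ht.
  assert (H1 : P p (rho x t) <= P 3 (Rabs t)).
  { eapply Rle_trans. apply P_anti. lra. split; [apply Rabs_pos|apply Hr].
    replace p with ((p - 3) + 3) by ring. rewrite <- P_mul by lra.
    pose proof (P_le1 (p - 3) (Rabs t) ltac:(lra) Ht).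
    pose proof (P_pos 3 (Rabs t) Ht). nra. }
  rewrite P_three in H1 by auto.
  assert (H2 : 1 + t ^ 2 <= (1 + Rabs t) ^ 2).
  { rewrite <- (pow2_abs t). nra. }
  pose proof (Hh x t).
  assert (Hpos : 0 < 1 + Rabs t) by lra.
  apply Rle_trans with (C * / (1 + Rabs t) ^ 3 * (1 + Rabs t) ^ 2).
  - apply Rmult_le_compat. apply Rabs_pos. nra.
    eapply Rle_trans. apply H. apply Rmult_le_compat_l; auto. auto.
  - right. field. lra.
Qed.

Lemma T_deriv (h : R -> R -> R) : (forall x y, ex_derive (fun t => h t y) x) ->
  forall u t, is_derive (fun z => T h z t) u (T (pd1 h) u t).
Proof.
  intros Hd u t. unfold T. destruct (Rlt_dec (Rabs t) (PI / 2)).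
  - unfold pd1. auto_derive. exact (Hd u (tan t)). ring.
  - exact (@is_derive_const R_AbsRing R_NormedModule 0 u).
Qed.

Lemma param_deriv (h : R -> R -> R) C1 :
  0 <= C1 ->
  (forall x y, ex_derive (fun t => h t y) x) ->
  (forall x t, Rabs (pd1 h x t) * (1 + t ^ 2) <= C1 / (1 + Rabs t)) ->
  (forall x t, continuous (fun p : R * R => pd1 h (fst p) (snd p)) (x, t)) ->
  (forall x a b, ex_RInt (T h x) a b) ->
  forall th x, is_derive (fun z => RInt (T h z) (- PI / 2) th) x (RInt (T (pd1 h) x) (- PI / 2) th).
Proof.
  intros HC1 Hd Hb1 Hc1 Hex th x.
  assert (HD := T_deriv h Hd).
  assert (H := is_derive_RInt_param (fun z t => T h z t) (- PI / 2) th x).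
  replace (RInt (T (pd1 h) x) (- PI / 2) th) with (RInt (fun t => Derive (fun u => T h u t) x) (- PI / 2) th).
  apply H.
  - apply filter_forall. intros. eexists; apply HD.
  - intros t _. apply continuity_2d_pt_ext with (f := T (pd1 h)).
    intros; symmetry; apply is_derive_unique, HD.
    apply (T_cont2 (pd1 h) C1); auto.
  - apply filter_forall. intros. apply Hex.
  - apply RInt_ext. intros; apply is_derive_unique, HD.
Qed.

Lemma norm2_x0 x : norm2 x 0 = Rabs x.
Proof. unfold norm2. rewrite <- sqrt_Rsqr_abs. f_equal. unfold Rsqr. ring. Qed.

Lemma KE_pos p : 0 < KE p.
Proof. unfold KE. assert (0 < Rpower 2 (p - 1)) by (unfold Rpower; apply exp_pos). lra. Qed.

Lemma chasles_split h C x y : 0 <= C ->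
  (forall x t, Rabs (h x t) * (1 + t ^ 2) <= C / (1 + Rabs t)) ->
  (forall x t, continuous (fun p : R * R => h (fst p) (snd p)) (x, t)) ->
  RInt (T h x) (- PI / 2) (PI / 2) - RInt (T h x) (- PI / 2) (atan y) =
  RInt (T h x) (atan y) (PI / 2).
Proof.
  intros HC Hb Hc.
  rewrite <- (RInt_Chasles (T h x) (- PI / 2) (atan y) (PI / 2)) by (apply (T_ex h C); auto).
  unfold plus; simpl. ring.
Qed.

Theorem lemma4p5 (B : R -> R -> R) :
  smooth2 B ->
  (exists sB : R, 4 < sB /\
     forall k l : nat, exists C : R, forall x y,
       Rabs (dmulti k l B x y)
         <= C * Rpower (1 + norm2 x y) (- sB - INR (k + l))) ->
  integral_R2_is B 0 ->
  exists A1 A2 : R -> R -> R,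
    differentiable2 A1 /\ differentiable2 A2 /\
    (forall x y, pd1 A2 x y - pd2 A1 x y = B x y) /\
    decay_little 3 (fun x y => pd1 A1 x y + pd2 A2 x y) /\
    decay_little 3 (fun x y => norm2 (A1 x y) (A2 x y)).
Proof.
  intros Hsm [s [Hs4 Hdk]] Hint.
  destruct (Hdk 0%nat 0%nat) as [C0 HC0].
  destruct (Hdk 1%nat 0%nat) as [C1 HC1].
  assert (H0 : forall x y, Rabs (B x y) <= C0 * P s (norm2 x y)).
  { intros x y. specialize (HC0 x y). unfold dmulti in HC0. simpl in HC0.
    unfold P. replace (- s) with (- s - 0) by ring. exact HC0. }
  assert (HC0p : 0 <= C0).
  { pose proof (H0 0 0). pose proof (P_pos s (norm2 0 0) (norm2_ge0 _ _)).
    pose proof (Rabs_pos (B 0 0)).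
    destruct (Rle_lt_dec 0 C0); auto. nra. }
  assert (HC1' : forall x y, Rabs (pd1 B x y) <= C1 * P (s + 1) (norm2 x y)).
  { intros x y. specialize (HC1 x y). unfold dmulti in HC1. simpl in HC1.
    unfold P. replace (- (s + 1)) with (- s - 1) by ring. exact HC1. }
  assert (HC1p : 0 <= C1).
  { pose proof (HC1' 0 0). pose proof (P_pos (s + 1) (norm2 0 0) (norm2_ge0 _ _)).
    pose proof (Rabs_pos (pd1 B 0 0)).
    destruct (Rle_lt_dec 0 C1); auto. nra. }
  assert (H1 : forall x y, Rabs (pd1 B x y) <= C1 * P s (norm2 x y)).
  { intros x y. eapply Rle_trans. apply HC1'. apply Rmult_le_compat_l; auto.
    replace (s + 1) with (s + 1) by ring. rewrite <- P_mul by apply norm2_ge0.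
    pose proof (P_le1 1 (norm2 x y) ltac:(lra) (norm2_ge0 _ _)).
    pose proof (P_pos s (norm2 x y) (norm2_ge0 _ _)). nra. }
  destruct (Hsm nil) as [HBc HBd]. simpl in HBc, HBd.
  destruct (Hsm (true :: nil)) as [HB1c _]. simpl in HB1c.
  assert (Hb0 := HbP B norm2 C0 s HC0p ltac:(lra) norm2_ge_r H0).
  assert (Hb1 := HbP (pd1 B) norm2 C1 s HC1p ltac:(lra) norm2_ge_r H1).
  assert (HBd1 : forall x y, ex_derive (fun t => B t y) x) by (intros; apply HBd).
  assert (HexB := T_ex B C0 HC0p Hb0 HBc).
  assert (HexB1 := T_ex (pd1 B) C1 HC1p Hb1 HB1c).
  set (F := fun x y => RInt (T B x) (- PI / 2) (atan y)).
  set (Fx := fun x y => RInt (T (pd1 B) x) (- PI / 2) (atan y)).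
  set (b := fun x => RInt (T B x) (- PI / 2) (PI / 2)).
  set (b1 := fun x => RInt (T (pd1 B) x) (- PI / 2) (PI / 2)).
  assert (HF1 : forall u v, is_derive (fun z => F z v) u (Fx u v)).
  { intros u v. unfold F, Fx. apply (param_deriv B C1); auto. }
  assert (HF2 : forall u v, is_derive (fun z => F u z) v (B u v)).
  { intros u v. unfold F. apply (T_FTC_atan B C0); auto. }
  assert (Hbd : forall u, is_derive b u (b1 u)).
  { intros u. unfold b, b1. apply (param_deriv B C1); auto. }
  set (Kb := 2 * C0 * KE s).
  set (Kb1 := 2 * C1 * KE s).
  set (Kbe := Kb * KE (s - 1)).
  set (K := Kb + Kb1 + Kbe).
  pose proof (KE_pos s). pose proof (KE_pos (s - 1)).
  assert (HKb : 0 <= Kb) by (unfold Kb; nra).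
  assert (HKb1 : 0 <= Kb1) by (unfold Kb1; nra).
  assert (HKbe : 0 <= Kbe) by (unfold Kbe; nra).
  assert (HK : 0 <= K) by (unfold K; lra).
  assert (HFl : forall u v, v <= 0 -> Rabs (F u v) <= K * P (s - 1) (norm2 u v)).
  { intros u v Hv. unfold F. eapply Rle_trans. apply (E2 B C0 s u); auto. lra.
    apply Rmult_le_compat_r. left; apply P_pos, norm2_ge0. unfold K, Kb, Kb1, Kbe. nra. }
  assert (HFu : forall u v, 0 <= v -> Rabs (b u - F u v) <= K * P (s - 1) (norm2 u v)).
  { intros u v Hv. unfold b, F. rewrite (chasles_split B C0) by auto.
    eapply Rle_trans. apply (E3 B C0 s u v); auto. lra.
    apply Rmult_le_compat_r. left; apply P_pos, norm2_ge0. unfold K, Kb, Kb1, Kbe. nra. }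
  assert (HFxl : forall u v, v <= 0 -> Rabs (Fx u v) <= K * P (s - 1) (norm2 u v)).
  { intros u v Hv. unfold Fx. eapply Rle_trans. apply (E2 (pd1 B) C1 s u); auto. lra.
    apply Rmult_le_compat_r. left; apply P_pos, norm2_ge0. unfold K, Kb, Kb1, Kbe. nra. }
  assert (HFxu : forall u v, 0 <= v -> Rabs (b1 u - Fx u v) <= K * P (s - 1) (norm2 u v)).
  { intros u v Hv. unfold b1, Fx. rewrite (chasles_split (pd1 B) C1) by auto.
    eapply Rle_trans. apply (E3 (pd1 B) C1 s u v); auto. lra.
    apply Rmult_le_compat_r. left; apply P_pos, norm2_ge0. unfold K, Kb, Kb1, Kbe. nra. }
  assert (Hbb0 : forall u, Rabs (b u) <= Kb * P (s - 1) (Rabs u)).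
  { intros u. replace (b u) with (F u 0 + (b u - F u 0)) by ring.
    eapply Rle_trans. apply Rabs_triang.
    pose proof (E2 B C0 s u HC0p ltac:(lra) (H0 u) (HexB u) 0 ltac:(lra)) as Ea.
    pose proof (E3 B C0 s u 0 HC0p ltac:(lra) (H0 u) (HexB u) ltac:(lra)) as Eb.
    rewrite norm2_x0 in Ea, Eb. unfold b, F in *.
    rewrite (chasles_split B C0) by auto. unfold Kb. lra. }
  assert (Hb1b0 : forall u, Rabs (b1 u) <= Kb1 * P (s - 1) (Rabs u)).
  { intros u. replace (b1 u) with (Fx u 0 + (b1 u - Fx u 0)) by ring.
    eapply Rle_trans. apply Rabs_triang.
    pose proof (E2 (pd1 B) C1 s u HC1p ltac:(lra) (H1 u) (HexB1 u) 0 ltac:(lra)) as Ea.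
    pose proof (E3 (pd1 B) C1 s u 0 HC1p ltac:(lra) (H1 u) (HexB1 u) ltac:(lra)) as Eb.
    rewrite norm2_x0 in Ea, Eb. unfold b1, Fx in *.
    rewrite (chasles_split (pd1 B) C1) by auto. unfold Kb1. lra. }
  assert (Hbc : forall z, continuous b z) by (apply (cont_of_deriv b b1); auto).
  set (bf := fun (_ t : R) => b t).
  assert (Hbfc : forall x t, continuous (fun p : R * R => bf (fst p) (snd p)) (x, t)).
  { intros x t. unfold bf. apply (continuous_comp (fun p : R * R => snd p) b).
    apply continuous_snd. apply Hbc. }
  assert (Hbfp : forall x t, Rabs (bf x t) <= Kb * P (s - 1) (Rabs t)).
  { intros; unfold bf; apply Hbb0. }
  assert (Hbfb := HbP bf (fun _ t => Rabs t) Kb (s - 1) HKb ltac:(lra) (fun _ t => Rle_refl _) Hbfp).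
  assert (Hexbf := T_ex bf Kb HKb Hbfb Hbfc).
  set (be := fun x => RInt (T bf 0) (- PI / 2) (atan x)).
  assert (Hbe : forall u, is_derive be u (b u)).
  { intros u. unfold be. apply (T_FTC_atan bf Kb); auto. }
  assert (Htot : RInt (T bf 0) (- PI / 2) (PI / 2) = 0).
  { assert (Hg1 : is_RInt_gen b (Rbar_locally m_infty) (Rbar_locally p_infty) 0).
    { unfold integral_R2_is in Hint.
      apply (is_RInt_gen_ext (fun x => RInt_gen (fun y => B x y) (Rbar_locally m_infty) (Rbar_locally p_infty))).
      - apply filter_forall. intros ab x _. unfold b.
        apply is_RInt_gen_unique. apply (Igen B C0); auto.
      - exact Hint. }
    assert (Hg2 := Igen bf Kb HKb Hbfb Hbfc 0).
    apply (@is_RInt_gen_unique R_CompleteNormedModule) in Hg1; [|apply Proper_StrongProper, Rbar_locally_filter|apply Proper_StrongProper, Rbar_locally_filter].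
    apply (@is_RInt_gen_unique R_CompleteNormedModule) in Hg2; [|apply Proper_StrongProper, Rbar_locally_filter|apply Proper_StrongProper, Rbar_locally_filter].
    rewrite <- Hg2. exact Hg1. }
  assert (Hbeb : forall u, Rabs (be u) <= K * P (s - 1 - 1) (Rabs u)).
  { intros u. assert (Hp : forall t, Rabs (bf 0 t) <= Kb * P (s - 1) (norm2 0 t)).
    { intros t. rewrite norm2_0. apply Hbfp. }
    destruct (Rle_lt_dec u 0) as [Hu|Hu].
    - eapply Rle_trans. apply (E2 bf Kb (s - 1) 0); auto. lra.
      rewrite norm2_0. apply Rmult_le_compat_r. left; apply P_pos, Rabs_pos.
      unfold K, Kbe. lra.
    - unfold be.
      replace (RInt (T bf 0) (- PI / 2) (atan u)) with
        (- (RInt (T bf 0) (- PI / 2) (PI / 2) - RInt (T bf 0) (- PI / 2) (atan u)))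
        by (rewrite Htot; ring).
      rewrite (chasles_split bf Kb) by auto. rewrite Rabs_Ropp.
      eapply Rle_trans. apply (E3 bf Kb (s - 1) 0 u); auto. lra. lra.
      rewrite norm2_0. apply Rmult_le_compat_r. left; apply P_pos, Rabs_pos.
      unfold K, Kbe. lra. }
  assert (Hbb : forall u, Rabs (b u) <= K * P (s - 1) (Rabs u)).
  { intros u. eapply Rle_trans. apply Hbb0. apply Rmult_le_compat_r. left; apply P_pos, Rabs_pos.
    unfold K; lra. }
  assert (Hb1b : forall u, Rabs (b1 u) <= K * P (s - 1) (Rabs u)).
  { intros u. eapply Rle_trans. apply Hb1b0. apply Rmult_le_compat_r. left; apply P_pos, Rabs_pos.
    unfold K; lra. }
  assert (HBc2 : forall u v, continuity_2d_pt B u v) by (intros; apply cont2_of; apply HBc).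
  assert (Hq : 3 < s - 1) by lra.
  assert (Hc2 : 0 < Rpower 2 (s - 1)) by (unfold Rpower; apply exp_pos).
  exists (A1 F b be), (A2 be).
  split; [|split; [|split; [|split]]].
  - intros x y. apply (exdiff_of (A1 F b be) (D1 Fx b b1 be) (E1 B b be)).
    + apply dA1x; auto.
    + apply dA1y; auto.
    + apply (E1_cont B b b1 be); auto.
  - intros x y. apply (exdiff_of (A2 be) (DA2x b be) (DA2y be)).
    + apply dA2x; auto.
    + apply dA2y.
    + apply (DA2y_cont b be); auto.
  - intros x y. unfold pd1, pd2.
    replace (Derive (fun t => A2 be t y) x) with (DA2x b be x y)
      by (symmetry; apply is_derive_unique; apply dA2x; auto).
    replace (Derive (fun t => A1 F b be x t) y) with (E1 B b be x y)
      by (symmetry; apply is_derive_unique; apply dA1y; auto).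
    apply curl_eq.
  - apply (decay_of _ ((1 + 26 * Rpower 2 (s - 1)) * K) (s - 1)). nra. auto.
    intros x y. unfold pd1, pd2.
    replace (Derive (fun t => A1 F b be t y) x) with (D1 Fx b b1 be x y)
      by (symmetry; apply is_derive_unique; apply dA1x; auto).
    replace (Derive (fun t => A2 be x t) y) with (DA2y be x y)
      by (symmetry; apply is_derive_unique; apply dA2y).
    apply div_b; auto.
  - apply (decay_of _ ((1 + 4 * Rpower 2 (s - 1)) * K + 2 * Rpower 2 (s - 1) * K) (s - 1)). nra. auto.
    intros x y.
    pose proof (A1_b F b be (s - 1) K Hq HK HFl HFu Hbb Hbeb x y).
    pose proof (A2_b be (s - 1) K Hq HK Hbeb x y).
    rewrite Rabs_pos_eq by apply norm2_ge0.
    eapply Rle_trans. apply norm2_le. lra.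
Qed.
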